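(* Let $\tau\in W^{1,\infty}((0,L);S^{n-1})$, $k\ge0$, $\lambda\in\mathbb{R}^n$ and $f\in W^{1,\infty}(0,L)\setminus\{0\}$ with $f\ge0$ be such that $f(\tau''+k^2\tau)=\beta k^2\,\mathrm{proj}^\perp_{\tau,\tau'}(\lambda)$ and $f'=\beta\,\lambda\cdot\tau'$ hold weakly in $(0,L)$ (the first in the sense $\int_0^L(f(\tau'\cdot\xi'-k^2\tau\cdot\xi)+f'\tau'\cdot\xi+k^2\beta\,\mathrm{proj}^\perp_{\tau,\tau'}(\lambda)\cdot\xi)\,dt=0$ for all $\xi\in C_0^\infty((0,L);\mathbb{R}^n)$). Then there exist $\tilde f\in W^{1,\infty}(0,L)\setminus\{0\}$ with $\tilde f\ge0$ and $\tilde\lambda\in S^{n-1}$ such that the same two equations hold weakly with $\tilde f$ in place of $f$ and $\tilde\lambda$ in place of $\lambda$.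
   Context: $\beta\colon[0,L]\to(0,\infty)$ is a function of bounded variation, bounded and bounded away from $0$ (it arises as $\beta=\alpha\circ\phi$ for a reparametrisation $\phi$). $\mathrm{proj}^\perp_{V,W}$ is the orthogonal projection onto the orthogonal complement of the span of $V,W\in\mathbb{R}^n$. *)

(* Defs.v *)
From Stdlib Require Import Reals Lra List.
Open Scope R_scope.

(* ---------- vectors of R^n, represented as nat -> R (indices < n) ---------- *)
Fixpoint dot (n : nat) (u v : nat -> R) : R :=
  match n with
  | O => 0
  | S m => dot m u v + u m * v m
  end.

Definition vsub (u v : nat -> R) : nat -> R := fun i => u i - v i.
Definition vscale (c : R) (u : nat -> R) : nat -> R := fun i => c * u i.

Definition remove_comp (n : nat) (u x : nat -> R) : nat -> R :=
  if Req_EM_T (dot n u u) 0 then x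
  else vsub x (vscale (dot n x u / dot n u u) u).

(* orthogonal projection onto the orthogonal complement of span{V, W}
   (Gram-Schmidt: W' := W - proj_V W, then remove components along V and W') *)
Definition proj_perp (n : nat) (V W x : nat -> R) : nat -> R :=
  remove_comp n (remove_comp n V W) (remove_comp n V x).

(* a tagged partition is a list of (tag, right endpoint) pairs *)
Fixpoint fine_part (delta : R -> R) (a b : R) (P : list (R * R)) : Prop :=
  match P with
  | nil => a = b
  | (t, x) :: P' => a < x /\ a <= t <= x /\ x - a < delta t /\ fine_part delta x b P'
  end.

Fixpoint rsum (g : R -> R) (a : R) (P : list (R * R)) : R :=
  match P with
  | nil => 0
  | (t, x) :: P' => g t * (x - a) + rsum g x P'
  end.

Definition HKint (g : R -> R) (a b I : R) : Prop :=
  forall eps, 0 < eps ->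
    exists delta : R -> R, (forall t, 0 < delta t) /\
      forall P, fine_part delta a b P -> Rabs (rsum g a P - I) < eps.

(* ---------- W^{1,infty}(0,L): f(t) = f(0) + int_0^t g with g bounded ---------- *)
Definition W1inf (L : R) (f g : R -> R) : Prop :=
  (exists M, forall t, 0 <= t <= L -> Rabs (g t) <= M) /\
  (forall t, 0 <= t <= L -> HKint g 0 t (f t - f 0)).

Fixpoint chain_in (b x : R) (l : list R) : Prop :=
  match l with
  | nil => True
  | y :: l' => x <= y /\ y <= b /\ chain_in b y l'
  end.

Fixpoint variation (beta : R -> R) (x : R) (l : list R) : R :=
  match l with
  | nil => 0
  | y :: l' => Rabs (beta y - beta x) + variation beta y l'
  end.

Definition bounded_variation (beta : R -> R) (a b : R) : Prop :=
  exists V, forall x0 l, a <= x0 -> chain_in b x0 l -> variation beta x0 l <= V.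

Definition beta_hyp (L : R) (beta : R -> R) : Prop :=
  bounded_variation beta 0 L /\
  exists m M, 0 < m /\ forall t, 0 <= t <= L -> m <= beta t <= M.

Definition test_fun (L : R) (phi phi' : R -> R) : Prop :=
  (exists D : nat -> R -> R, D 0%nat = phi /\ D 1%nat = phi' /\
     forall j x, derivable_pt_lim (D j) x (D (S j) x)) /\
  (exists a b, 0 < a /\ a <= b /\ b < L /\
     forall t, t < a \/ b < t -> phi t = 0).

Definition weak_eqs (n : nat) (L k : R) (beta : R -> R) (tau tau' : R -> nat -> R)
    (f f' : R -> R) (lam : nat -> R) : Prop :=
  (forall xi xi' : R -> nat -> R,
     (forall i, (i < n)%nat -> test_fun L (fun t => xi t i) (fun t => xi' t i)) ->
     HKint (fun t =>
        f t * (dot n (tau' t) (xi' t) - k ^ 2 * dot n (tau t) (xi t))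
        + f' t * dot n (tau' t) (xi t)
        + k ^ 2 * beta t * dot n (proj_perp n (tau t) (tau' t) lam) (xi t))
       0 L 0) /\
  (forall phi phi' : R -> R, test_fun L phi phi' ->
     HKint (fun t => f t * phi' t + beta t * dot n lam (tau' t) * phi t) 0 L 0).

(* Main.v *)
Require Import Defs.
From Stdlib Require Import Reals Lra List Lia Arith ZArith Classical ClassicalEpsilon FunctionalExtensionality.
Open Scope R_scope.

Lemma fine_part_le d a b P : fine_part d a b P -> a <= b.
Proof.
  revert a; induction P as [|[t x] P IH]; simpl; intros a H.
  - lra.
  - destruct H as (H1 & H2 & H3 & H4). specialize (IH _ H4). lra.
Qed.

Lemma fine_part_app d a b c P Q :
  fine_part d a b P -> fine_part d b c Q -> fine_part d a c (P ++ Q).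
Proof.
  revert a; induction P as [|[t x] P IH]; simpl; intros a H1 H2.
  - subst; auto.
  - destruct H1 as (?&?&?&?). repeat split; auto; lra.
Qed.

Lemma rsum_app g d a b P Q :
  fine_part d a b P -> rsum g a (P ++ Q) = rsum g a P + rsum g b Q.
Proof.
  revert a; induction P as [|[t x] P IH]; simpl; intros a H1.
  - subst; ring.
  - destruct H1 as (?&?&?&?). rewrite (IH x); auto. ring.
Qed.

Lemma fine_part_mono d d' a b P :
  (forall t, d t <= d' t) -> fine_part d a b P -> fine_part d' a b P.
Proof.
  intros Hd; revert a; induction P as [|[t x] P IH]; simpl; intros a H; auto.
  destruct H as (?&?&?&?). specialize (Hd t). repeat split; auto; lra.
Qed.

Lemma rsum_ext g h d a b P :
  (forall t, a <= t <= b -> g t = h t) -> fine_part d a b P -> rsum g a P = rsum h a P.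
Proof.
  revert a; induction P as [|[t x] P IH]; simpl; intros a Hg H; auto.
  destruct H as (?&?&?&?). pose proof (fine_part_le _ _ _ _ H2).
  rewrite Hg by lra. rewrite (IH x); auto. intros; apply Hg; lra.
Qed.

Lemma rsum_le g h d a b P :
  (forall t, a <= t <= b -> g t <= h t) -> fine_part d a b P -> rsum g a P <= rsum h a P.
Proof.
  revert a; induction P as [|[t x] P IH]; simpl; intros a Hg H; [lra|].
  destruct H as (?&?&?&?). pose proof (fine_part_le _ _ _ _ H2).
  assert (g t <= h t) by (apply Hg; lra).
  assert (rsum g x P <= rsum h x P) by (apply IH; auto; intros; apply Hg; lra).
  assert (g t * (x - a) <= h t * (x - a)) by (apply Rmult_le_compat_r; lra).
  lra.
Qed.

Lemma rsum_const c d a b P : fine_part d a b P -> rsum (fun _ => c) a P = c * (b - a).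
Proof.
  revert a; induction P as [|[t x] P IH]; simpl; intros a H.
  - subst; ring.
  - destruct H as (?&?&?&?). rewrite (IH x); auto. ring.
Qed.

Lemma rsum_plus g h a P : rsum (fun t => g t + h t) a P = rsum g a P + rsum h a P.
Proof.
  revert a; induction P as [|[t x] P IH]; simpl; intros a; [ring|]. rewrite IH; ring.
Qed.

Lemma rsum_scal c g a P : rsum (fun t => c * g t) a P = c * rsum g a P.
Proof.
  revert a; induction P as [|[t x] P IH]; simpl; intros a; [ring|]. rewrite IH; ring.
Qed.

Lemma cousin d a b : (forall t, 0 < d t) -> a <= b -> exists P, fine_part d a b P.
Proof.
  intros Hd Hab.
  set (E := fun x => a <= x <= b /\ exists P, fine_part d a x P).
  assert (Hb : bound E) by (exists b; intros x [Hx _]; lra).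
  assert (Hne : exists x, E x) by (exists a; split; [lra| exists nil; reflexivity]).
  destruct (completeness E Hb Hne) as [s [Hs1 Hs2]].
  assert (Has: a <= s) by (apply Hs1; split; [lra | exists nil; reflexivity]).
  assert (Hsb: s <= b) by (apply Hs2; intros x [Hx _]; lra).
  assert (HsE: exists P, fine_part d a s P).
  { destruct (classic (exists y, E y /\ s - d s < y)) as [[y [[Hy [P HP]] Hy2]]|Hn].
    - assert (y <= s) by (apply Hs1; split; [auto| exists P; auto]).
      destruct (Req_dec y s) as [->|Hys]. exists P; auto.
      exists (P ++ (s,s)::nil). apply fine_part_app with y; auto. simpl. repeat split; lra.
    - exfalso.
      assert (is_upper_bound E (s - d s)).
      { intros x Hx. apply Rnot_lt_le; intro; apply Hn; exists x; auto. }
      specialize (Hs2 _ H). specialize (Hd s). lra. }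
  destruct HsE as [P HP].
  destruct (Req_dec s b) as [<-|Hsb']. exists P; auto.
  exfalso. set (x' := Rmin b (s + d s / 2)).
  assert (Hds := Hd s).
  assert (Hx1 : s < x') by (unfold x'; apply Rmin_glb_lt; lra).
  assert (Hx2 : x' <= s + d s / 2) by apply Rmin_r.
  assert (Hx3 : x' <= b) by apply Rmin_l.
  assert (E x').
  { split; [lra|]. exists (P ++ (s,x')::nil). apply fine_part_app with s; auto.
    simpl; repeat split; lra. }
  specialize (Hs1 _ H). lra.
Qed.

Lemma HKint_unique g a b I J : a <= b -> HKint g a b I -> HKint g a b J -> I = J.
Proof.
  intros Hab HI HJ. destruct (Req_dec I J) as [|HIJ]; auto. exfalso.
  set (e := Rabs (I - J) / 2).
  assert (He : 0 < e) by (unfold e; assert (0 < Rabs (I - J)) by (apply Rabs_pos_lt; lra); lra).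
  destruct (HI e He) as [d1 [Hd1 H1]]. destruct (HJ e He) as [d2 [Hd2 H2]].
  destruct (cousin (fun t => Rmin (d1 t) (d2 t)) a b) as [P HP]; auto.
  intros; apply Rmin_glb_lt; auto.
  specialize (H1 P (fine_part_mono _ _ _ _ _ (fun t => Rmin_l _ _) HP)).
  specialize (H2 P (fine_part_mono _ _ _ _ _ (fun t => Rmin_r _ _) HP)).
  assert (Rabs (I - J) <= Rabs (rsum g a P - J) + Rabs (rsum g a P - I)).
  { replace (I - J) with ((rsum g a P - J) - (rsum g a P - I)) by ring. apply Rabs_triang_inv2 || (eapply Rle_trans; [apply Rabs_triang|]; rewrite Rabs_Ropp; lra). }
  unfold e in *; lra.
Qed.

Lemma HKint_ext g h a b I :
  (forall t, a <= t <= b -> g t = h t) -> HKint g a b I -> HKint h a b I.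
Proof.
  intros Hgh HI e He. destruct (HI e He) as [d [Hd H]]. exists d; split; auto.
  intros P HP. rewrite <- (rsum_ext g h d a b P); auto.
Qed.

Lemma HKint_plus g h a b I J :
  HKint g a b I -> HKint h a b J -> HKint (fun t => g t + h t) a b (I + J).
Proof.
  intros HI HJ e He.
  destruct (HI (e/2) ltac:(lra)) as [d1 [Hd1 H1]]. destruct (HJ (e/2) ltac:(lra)) as [d2 [Hd2 H2]].
  exists (fun t => Rmin (d1 t) (d2 t)); split. intros; apply Rmin_glb_lt; auto.
  intros P HP. rewrite rsum_plus.
  specialize (H1 P (fine_part_mono _ _ _ _ _ (fun t => Rmin_l _ _) HP)).
  specialize (H2 P (fine_part_mono _ _ _ _ _ (fun t => Rmin_r _ _) HP)).
  replace (rsum g a P + rsum h a P - (I + J)) with ((rsum g a P - I) + (rsum h a P - J)) by ring.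
  eapply Rle_lt_trans; [apply Rabs_triang|]. lra.
Qed.

Lemma HKint_scal c g a b I : HKint g a b I -> HKint (fun t => c * g t) a b (c * I).
Proof.
  intros HI e He.
  destruct (HI (e / (Rabs c + 1))) as [d [Hd H]].
  { apply Rdiv_lt_0_compat; auto. pose proof (Rabs_pos c); lra. }
  exists d; split; auto. intros P HP. rewrite rsum_scal.
  replace (c * rsum g a P - c * I) with (c * (rsum g a P - I)) by ring.
  rewrite Rabs_mult. specialize (H P HP).
  pose proof (Rabs_pos c). pose proof (Rabs_pos (rsum g a P - I)).
  apply Rle_lt_trans with ((Rabs c + 1) * Rabs (rsum g a P - I)). nra.
  apply Rmult_lt_compat_l with (r := Rabs c + 1) in H; [|lra].
  replace ((Rabs c + 1) * (e / (Rabs c + 1))) with e in H by (field; lra). lra.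
Qed.

Lemma HKint_const c a b : a <= b -> HKint (fun _ => c) a b (c * (b - a)).
Proof.
  intros Hab e He. exists (fun _ => 1); split; [intros; lra|].
  intros P HP. rewrite (rsum_const c _ a b P HP). rewrite Rminus_diag, Rabs_R0; auto.
Qed.

Lemma HKint_zero a b : HKint (fun _ => 0) a b 0.
Proof.
  intros e He. exists (fun _ => 1); split; [intros; lra|].
  intros P HP. replace (rsum (fun _ => 0) a P) with 0. rewrite Rminus_diag, Rabs_R0; auto.
  clear HP. revert a; induction P as [|[t x] P IH]; simpl; intros; auto. rewrite <- IH; ring.
Qed.

Lemma HKint_le g h a b I J : a <= b ->
  (forall t, a <= t <= b -> g t <= h t) -> HKint g a b I -> HKint h a b J -> I <= J.
Proof.
  intros Hab Hgh HI HJ. apply Rnot_lt_le; intro HIJ.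
  set (e := (I - J) / 2).
  destruct (HI e ltac:(unfold e; lra)) as [d1 [Hd1 H1]]. destruct (HJ e ltac:(unfold e; lra)) as [d2 [Hd2 H2]].
  destruct (cousin (fun t => Rmin (d1 t) (d2 t)) a b) as [P HP]; auto.
  intros; apply Rmin_glb_lt; auto.
  specialize (H1 P (fine_part_mono _ _ _ _ _ (fun t => Rmin_l _ _) HP)).
  specialize (H2 P (fine_part_mono _ _ _ _ _ (fun t => Rmin_r _ _) HP)).
  pose proof (rsum_le g h _ a b P Hgh HP).
  apply Rabs_def2 in H1. apply Rabs_def2 in H2. unfold e in *; lra.
Qed.

Lemma HKint_bound g a b I M : a <= b ->
  (forall t, a <= t <= b -> Rabs (g t) <= M) -> HKint g a b I -> Rabs I <= M * (b - a).
Proof.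
  intros Hab Hg HI.
  assert (I <= M * (b - a)).
  { apply (HKint_le g (fun _ => M) a b); auto. intros t Ht; specialize (Hg t Ht).
    apply Rabs_def2b in Hg || (pose proof (Rle_abs (g t)); lra). apply HKint_const; auto. }
  assert (- M * (b - a) <= I).
  { apply (HKint_le (fun _ => - M) g a b); auto. intros t Ht; specialize (Hg t Ht).
    pose proof (Rle_abs (- g t)). rewrite Rabs_Ropp in H0. lra. apply HKint_const; auto. }
  apply Rabs_le; lra.
Qed.

Lemma HKint_point g a I : HKint g a a I -> I = 0.
Proof.
  intros H. apply (HKint_unique g a a); auto. lra.
  intros e He. exists (fun _ => 1); split; [intros; lra|].
  intros [|[t x] P] HP; simpl in *. rewrite Rminus_diag, Rabs_R0; auto.
  destruct HP as (?&?&?&?). pose proof (fine_part_le _ _ _ _ H3). lra.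
Qed.

Lemma HKint_restr g a u v A B : a <= u -> u <= v ->
  HKint g a u A -> HKint g a v B -> HKint g u v (B - A).
Proof.
  intros Hau Huv HA HB e He.
  destruct (HA (e/2) ltac:(lra)) as [d1 [Hd1 H1]]. destruct (HB (e/2) ltac:(lra)) as [d2 [Hd2 H2]].
  exists (fun t => Rmin (d1 t) (d2 t)); split. intros; apply Rmin_glb_lt; auto.
  intros P HP.
  destruct (cousin (fun t => Rmin (d1 t) (d2 t)) a u) as [Q HQ]; auto.
  intros; apply Rmin_glb_lt; auto.
  pose proof (fine_part_app _ _ _ _ _ _ HQ HP) as HQP.
  specialize (H2 _ (fine_part_mono _ _ _ _ _ (fun t => Rmin_r _ _) HQP)).
  specialize (H1 _ (fine_part_mono _ _ _ _ _ (fun t => Rmin_l _ _) HQ)).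
  rewrite (rsum_app g _ a u Q P HQ) in H2.
  apply Rabs_def2 in H1. apply Rabs_def2 in H2. apply Rabs_def1; lra.
Qed.

Lemma HKint_minus g h a b I J :
  HKint g a b I -> HKint h a b J -> HKint (fun t => g t - h t) a b (I - J).
Proof.
  intros HI HJ. apply (HKint_ext (fun t => g t + (-1) * h t)). intros; ring.
  replace (I - J) with (I + (-1) * J) by ring. apply HKint_plus; auto. apply HKint_scal; auto.
Qed.

Fixpoint dsum (g G : R -> R) (a : R) (P : list (R*R)) : R :=
  match P with nil => 0 | (t,x)::P' => Rabs (g t * (x - a) - (G x - G a)) + dsum g G x P' end.

Fixpoint ssum (sel : R -> R -> R -> bool) (g G : R -> R) a P :=
  match P with nil => 0 | (t,x)::P' =>
   (if sel a t x then g t * (x - a) - (G x - G a) else 0) + ssum sel g G x P' end.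

Lemma fill_lemma sel g G a0 b d :
  (forall u v, a0 <= u -> u <= v -> v <= b -> HKint g u v (G v - G u)) ->
  (forall t, 0 < d t) ->
  forall P a, a0 <= a -> fine_part d a b P -> forall eta, 0 < eta ->
  exists P', fine_part d a b P' /\
     Rabs (rsum g a P' - (G b - G a) - ssum sel g G a P) <= eta.
Proof.
  intros Hsub Hd P. induction P as [|[t x] P IH]; simpl; intros a Ha HP eta Heta.
  - subst. exists nil; simpl. split; auto. rewrite Rminus_diag. 
    replace (0 - 0 - 0) with 0 by ring. rewrite Rabs_R0; lra.
  - destruct HP as (H1 & H2 & H3 & H4).
    pose proof (fine_part_le _ _ _ _ H4) as Hxb.
    destruct (IH x ltac:(lra) H4 (eta/2) ltac:(lra)) as [P0 [HP0 HP0']].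
    destruct (sel a t x).
    + exists ((t,x)::P0). split. simpl; repeat split; auto; lra.
      simpl. eapply Rle_trans; [|apply (Rlt_le _ _ (Rlt_le_trans _ _ _ (Rle_lt_trans _ _ _ HP0' (ltac:(lra) : eta/2 < eta)) (Rle_refl _)))].
      right. f_equal. ring.
    + destruct (Hsub a x ltac:(lra) ltac:(lra) ltac:(lra) (eta/2) ltac:(lra)) as [d' [Hd' Hq]].
      destruct (cousin (fun s => Rmin (d s) (d' s)) a x) as [Q HQ]. intros; apply Rmin_glb_lt; auto. lra.
      exists (Q ++ P0). split.
      apply fine_part_app with x; auto. apply (fine_part_mono _ _ _ _ _ (fun t => Rmin_l _ _) HQ).
      rewrite (rsum_app g _ a x Q P0 HQ).
      specialize (Hq Q (fine_part_mono _ _ _ _ _ (fun t => Rmin_r _ _) HQ)).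
      apply Rabs_def2 in Hq. apply Rabs_def2b in HP0' || (apply Rabs_def2 in HP0' ||  idtac).
      revert HP0'. intro HP0'. pose proof (Rabs_le_inv_helper := 0).
      apply Rabs_le. pose proof (Rle_abs (rsum g x P0 - (G b - G x) - ssum sel g G x P)).
      pose proof (Rle_abs (-(rsum g x P0 - (G b - G x) - ssum sel g G x P))). rewrite Rabs_Ropp in H0.
      lra.
Qed.

Lemma le_eps x c : (forall eta, 0 < eta -> x <= c + eta) -> x <= c.
Proof.
  intros H. apply Rnot_lt_le; intro. specialize (H ((x - c)/2) ltac:(lra)). lra.
Qed.

Lemma dsum_split g G a d b P : fine_part d a b P ->
  dsum g G a P =
  ssum (fun a t x => if Rle_dec 0 (g t * (x - a) - (G x - G a)) then true else false) g G a P
  - ssum (fun a t x => if Rle_dec 0 (g t * (x - a) - (G x - G a)) then false else true) g G a P.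
Proof.
  revert a; induction P as [|[t x] P IH]; simpl; intros a HP; [ring|].
  destruct HP as (?&?&?&?). rewrite (IH x); auto.
  destruct (Rle_dec 0 (g t * (x - a) - (G x - G a))).
  - rewrite Rabs_right by lra. ring.
  - rewrite Rabs_left by lra. ring.
Qed.

Theorem saks_henstock g G a b :
  a <= b ->
  (forall u v, a <= u -> u <= v -> v <= b -> HKint g u v (G v - G u)) ->
  forall e, 0 < e -> exists d, (forall t, 0 < d t) /\
    forall P, fine_part d a b P -> dsum g G a P <= e.
Proof.
  intros Hab Hsub e He.
  destruct (Hsub a b ltac:(lra) Hab ltac:(lra) (e/4) ltac:(lra)) as [d [Hd H]].
  exists d; split; auto. intros P HP.
  rewrite (dsum_split g G a d b P HP).
  set (s1 := fun a t x => if Rle_dec 0 (g t * (x - a) - (G x - G a)) then true else false).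
  set (s2 := fun a t x => if Rle_dec 0 (g t * (x - a) - (G x - G a)) then false else true).
  assert (forall sel, Rabs (ssum sel g G a P) <= e/4).
  { intros sel. apply le_eps. intros eta Heta.
    destruct (fill_lemma sel g G a b d Hsub Hd P a ltac:(lra) HP eta Heta) as [P' [HP' HH]].
    specialize (H P' HP').
    pose proof (Rabs_triang (rsum g a P' - (G b - G a)) (-(rsum g a P' - (G b - G a) - ssum sel g G a P))).
    rewrite Rabs_Ropp in H0. replace (rsum g a P' - (G b - G a) + - (rsum g a P' - (G b - G a) - ssum sel g G a P)) with (ssum sel g G a P) in H0 by ring.
    lra. }
  pose proof (H0 s1). pose proof (H0 s2).
  pose proof (Rle_abs (ssum s1 g G a P)). pose proof (Rle_abs (- ssum s2 g G a P)).
  rewrite Rabs_Ropp in H4. lra.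
Qed.

Fixpoint asum (d : R -> R) a P :=
  match P with nil => 0 | (t,x)::P' => Rabs (d t) * (x - a) + asum d x P' end.

Definition null_on (d : R -> R) a b := forall e, 0 < e -> exists delta,
  (forall t, 0 < delta t) /\ forall P, fine_part delta a b P -> asum d a P <= e.

Lemma asum_nonneg d dl a b P : fine_part dl a b P -> 0 <= asum d a P.
Proof.
  revert a; induction P as [|[t x] P IH]; simpl; intros a HP; [lra|].
  destruct HP as (?&?&?&?). specialize (IH x H2). pose proof (Rabs_pos (d t)).
  assert (0 <= Rabs (d t) * (x - a)) by (apply Rmult_le_pos; lra). lra.
Qed.

Lemma null_of_zero d a b : a <= b ->
  (forall u v, a <= u -> u <= v -> v <= b -> HKint d u v 0) -> null_on d a b.
Proof.
  intros Hab H e He.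
  destruct (saks_henstock d (fun _ => 0) a b Hab) with (e := e) as [dl [Hdl HH]]; auto.
  intros. replace (0 - 0) with 0 by ring. auto.
  exists dl; split; auto. intros P HP. specialize (HH P HP).
  replace (asum d a P) with (dsum d (fun _ => 0) a P); auto.
  clear HH. revert a HP Hab H. induction P as [|[t x] P IH]; simpl; intros a HP Hab H; auto.
  destruct HP as (?&?&?&?). rewrite (IH x); auto.
  f_equal. replace (0 - 0) with 0 by ring. rewrite Rminus_0_r, Rabs_mult, (Rabs_right (x - a)); lra.
  eapply fine_part_le; eauto.
  intros; apply H; lra.
Qed.

Lemma null_le d h C a b : 0 <= C -> null_on d a b ->
  (forall t, a <= t <= b -> Rabs (h t) <= C * Rabs (d t)) -> null_on h a b.
Proof.
  intros HC Hd Hh e He.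
  destruct (Hd (e / (C + 1))) as [dl [Hdl H]]. apply Rdiv_lt_0_compat; lra.
  exists dl; split; auto. intros P HP. specialize (H P HP).
  assert (asum h a P <= C * asum d a P).
  { clear H Hd. revert a HP Hh. induction P as [|[t x] P IH]; simpl; intros a HP Hh; [lra|].
    destruct HP as (?&?&?&?). pose proof (fine_part_le _ _ _ _ H2).
    assert (Rabs (h t) * (x - a) <= C * Rabs (d t) * (x - a)).
    { apply Rmult_le_compat_r; [lra|]. apply Hh; lra. }
    specialize (IH x H2). assert (asum h x P <= C * asum d x P) by (apply IH; intros; apply Hh; lra).
    nra. }
  pose proof (asum_nonneg d _ _ _ _ HP).
  apply Rmult_le_compat_l with (r := C) in H; [|lra].
  assert (C * (e / (C + 1)) <= e).
  { unfold Rdiv. replace (C * (e * / (C + 1))) with (e * (C / (C + 1))) by (field; lra).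
    assert (C / (C + 1) <= 1). { apply Rmult_le_reg_r with (C + 1); [lra|]. unfold Rdiv; rewrite Rmult_assoc, Rinv_l; lra. }
    nra. }
  lra.
Qed.

Lemma null_add d1 d2 a b : null_on d1 a b -> null_on d2 a b ->
  null_on (fun t => Rabs (d1 t) + Rabs (d2 t)) a b.
Proof.
  intros H1 H2 e He.
  destruct (H1 (e/2) ltac:(lra)) as [dl1 [Hd1 K1]]. destruct (H2 (e/2) ltac:(lra)) as [dl2 [Hd2 K2]].
  exists (fun t => Rmin (dl1 t) (dl2 t)); split. intros; apply Rmin_glb_lt; auto.
  intros P HP.
  specialize (K1 P (fine_part_mono _ _ _ _ _ (fun t => Rmin_l _ _) HP)).
  specialize (K2 P (fine_part_mono _ _ _ _ _ (fun t => Rmin_r _ _) HP)).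
  assert (asum (fun t => Rabs (d1 t) + Rabs (d2 t)) a P = asum d1 a P + asum d2 a P).
  { clear K1 K2 H1 H2. revert a HP. induction P as [|[t x] P IH]; simpl; intros a HP; [ring|].
    destruct HP as (?&?&?&?). rewrite (IH x); auto.
    rewrite (Rabs_right (Rabs (d1 t) + Rabs (d2 t))). ring.
    pose proof (Rabs_pos (d1 t)); pose proof (Rabs_pos (d2 t)); lra. }
  lra.
Qed.

Lemma null_int d a b : null_on d a b -> HKint d a b 0.
Proof.
  intros H e He. destruct (H (e/2) ltac:(lra)) as [dl [Hdl K]]. exists dl; split; auto.
  intros P HP. specialize (K P HP). rewrite Rminus_0_r.
  assert (Rabs (rsum d a P) <= asum d a P).
  { clear K H. revert a HP. induction P as [|[t x] P IH]; simpl; intros a HP.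
    rewrite Rabs_R0; lra.
    destruct HP as (?&?&?&?). specialize (IH x H2).
    eapply Rle_trans; [apply Rabs_triang|]. rewrite Rabs_mult, (Rabs_right (x - a)) by lra. lra. }
  lra.
Qed.

Lemma zero_indef d a b : (forall t, a <= t <= b -> HKint d a t 0) ->
  forall u v, a <= u -> u <= v -> v <= b -> HKint d u v 0.
Proof.
  intros H u v Hu Huv Hv. replace 0 with (0 - 0) by ring.
  apply HKint_restr with a; auto. apply H; lra. apply H; lra.
Qed.

Lemma rsum_dsum g G d a b P : fine_part d a b P ->
  Rabs (rsum g a P - (G b - G a)) <= dsum g G a P.
Proof.
  revert a; induction P as [|[t x] P IH]; simpl; intros a HP.
  - subst b. replace (0 - (G a - G a)) with 0 by ring. rewrite Rabs_R0; lra.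
  - destruct HP as (?&?&?&?). specialize (IH x H2).
    replace (g t * (x - a) + rsum g x P - (G b - G a)) with
      ((g t * (x - a) - (G x - G a)) + (rsum g x P - (G b - G x))) by ring.
    eapply Rle_trans; [apply Rabs_triang|]. lra.
Qed.

Lemma dsum_nonneg g G a P : 0 <= dsum g G a P.
Proof.
  revert a; induction P as [|[t x] P IH]; simpl; intros; [lra|].
  pose proof (Rabs_pos (g t * (x - a) - (G x - G a))). specialize (IH x). lra.
Qed.

Lemma dsum_compare h G g F c1 c2 d a b P : 0 <= c1 ->
  fine_part d a b P ->
  (forall a' t x, a <= a' -> a' <= t -> t <= x -> x <= b -> x - a' < d t ->
     Rabs (h t * (x - a') - (G x - G a')) <= c1 * Rabs (g t * (x - a') - (F x - F a')) + c2 * (x - a')) ->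
  dsum h G a P <= c1 * dsum g F a P + c2 * (b - a).
Proof.
  intros Hc1. revert a; induction P as [|[t x] P IH]; simpl; intros a HP Hc.
  - subst b. lra.
  - destruct HP as (?&?&?&?). pose proof (fine_part_le _ _ _ _ H2).
    assert (dsum h G x P <= c1 * dsum g F x P + c2 * (b - x)).
    { apply IH; auto. intros; apply Hc; lra. }
    specialize (Hc a t x ltac:(lra) ltac:(lra) ltac:(lra) ltac:(lra) H1). nra.
Qed.

Lemma deriv_gauge F f a b eta : 0 < eta ->
  (forall t, a <= t <= b -> derivable_pt_lim F t (f t)) ->
  exists dl : R -> R, (forall t, 0 < dl t) /\
   forall t, a <= t <= b -> forall y, Rabs (y - t) < dl t ->
     Rabs (F y - F t - f t * (y - t)) <= eta * Rabs (y - t).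
Proof.
  intros Heta HF.
  assert (Hex : forall t, exists d, 0 < d /\ (a <= t <= b -> forall y, Rabs (y - t) < d ->
     Rabs (F y - F t - f t * (y - t)) <= eta * Rabs (y - t))).
  { intros t. destruct (classic (a <= t <= b)) as [Ht|Ht].
    - destruct (HF t Ht eta Heta) as [[del Hdel] Hd]. exists del; split; auto.
      intros _ y Hy. destruct (Req_dec y t) as [->|Hyt].
      + rewrite !Rminus_diag, Rmult_0_r, Rminus_0_r, Rabs_R0; lra.
      + specialize (Hd (y - t) ltac:(lra) Hy). simpl in Hd.
        replace (t + (y - t)) with y in Hd by ring.
        replace (F y - F t - f t * (y - t)) with (((F y - F t) / (y - t) - f t) * (y - t)) by (field; lra).
        rewrite Rabs_mult. apply Rmult_le_compat_r. apply Rabs_pos. lra.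
    - exists 1; split; [lra| intros; contradiction]. }
  exists (fun t => proj1_sig (constructive_indefinite_description _ (Hex t))).
  split; intros t; destruct (constructive_indefinite_description _ (Hex t)) as [d [Hd1 Hd2]]; simpl; auto.
Qed.

Theorem FTC F f a b : a <= b -> (forall t, a <= t <= b -> derivable_pt_lim F t (f t)) ->
  HKint f a b (F b - F a).
Proof.
  intros Hab HF e He.
  set (e' := e / (2 * (b - a + 1))).
  assert (He' : 0 < e') by (unfold e'; apply Rdiv_lt_0_compat; lra).
  destruct (deriv_gauge F f a b e' He' HF) as [dl [Hdl Hg]].
  exists dl; split; auto. intros P HP.
  eapply Rle_lt_trans; [apply (rsum_dsum f F dl a b P HP)|].
  eapply Rle_lt_trans; [apply (dsum_compare f F f F 0 e' dl a b P (Rle_refl 0) HP)|].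
  - intros a' t x H1 H2 H3 H4 H5.
    assert (K1 := Hg t ltac:(lra) x ltac:(rewrite Rabs_right; lra)).
    assert (K2 := Hg t ltac:(lra) a' ltac:(rewrite Rabs_left1; lra)).
    rewrite (Rabs_right (x - t)) in K1 by lra. rewrite (Rabs_left1 (a' - t)) in K2 by lra.
    replace (f t * (x - a') - (F x - F a')) with
      (- (F x - F t - f t * (x - t)) + (F a' - F t - f t * (a' - t))) by ring.
    eapply Rle_trans; [apply Rabs_triang|]. rewrite Rabs_Ropp.
    pose proof (Rabs_pos (f t * (x - a') - (F x - F a'))). lra.
  - unfold e'. rewrite Rmult_0_l, Rplus_0_l.
    apply Rlt_le_trans with (e / 2 ); [| lra].
    unfold Rdiv. rewrite Rinv_mult.
    assert (0 < / (b - a + 1) ) by (apply Rinv_0_lt_compat; lra).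
    assert ((b - a) * / (b - a + 1) < 1).
    { apply Rmult_lt_reg_r with (b - a + 1); [lra|]. rewrite Rmult_assoc, Rinv_l; lra. }
    nra.
Qed.

Lemma deriv_cont_bound w w' a b : a <= b ->
  (forall t, a <= t <= b -> derivable_pt_lim w t (w' t)) ->
  exists W, 0 <= W /\ forall t, a <= t <= b -> Rabs (w t) <= W.
Proof.
  intros Hab Hw.
  destruct (continuity_ab_maj (fun t => Rabs (w t)) a b Hab) as [m [Hm1 Hm2]].
  - intros c Hc. apply (continuity_pt_comp w Rabs). 
    apply (derivable_continuous_pt w c (exist _ (w' c) (Hw c Hc))).
    apply Rcontinuity_abs.
  - exists (Rabs (w m)); split; [apply Rabs_pos|]. auto.
Qed.

Theorem by_parts u U w w' a b M :
  a <= b ->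
  (forall t, a <= t <= b -> Rabs (u t) <= M) ->
  (forall x y, a <= x -> x <= y -> y <= b -> HKint u x y (U y - U x)) ->
  (forall t, a <= t <= b -> derivable_pt_lim w t (w' t)) ->
  HKint (fun t => u t * w t + U t * w' t) a b (U b * w b - U a * w a).
Proof.
  intros Hab HM HU Hw e He.
  assert (HM0 : 0 <= M) by (specialize (HM a ltac:(lra)); pose proof (Rabs_pos (u a)); lra).
  destruct (deriv_cont_bound w w' a b Hab Hw) as [W [HW0 HW]].
  assert (HLip : forall x y, a <= x -> x <= y -> y <= b -> Rabs (U y - U x) <= M * (y - x)).
  { intros. apply (HKint_bound u x y); auto. intros; apply HM; lra. }
  set (UB := Rabs (U a) + M * (b - a)).
  assert (HUB : forall t, a <= t <= b -> Rabs (U t) <= UB).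
  { intros t Ht. specialize (HLip a t ltac:(lra) ltac:(lra) ltac:(lra)).
    unfold UB. replace (U t) with (U a + (U t - U a)) by ring.
    eapply Rle_trans; [apply Rabs_triang|]. assert (M * (t - a) <= M * (b - a)) by (apply Rmult_le_compat_l; lra). lra. }
  assert (HUB0 : 0 <= UB) by (unfold UB; pose proof (Rabs_pos (U a)); nra).
  set (e1 := e / (2 * (W + 1))).
  assert (He1 : 0 < e1) by (unfold e1; apply Rdiv_lt_0_compat; lra).
  set (e2 := e / (4 * (b - a + 1))).
  assert (He2 : 0 < e2) by (unfold e2; apply Rdiv_lt_0_compat; lra).
  destruct (saks_henstock u U a b Hab HU e1 He1) as [d1 [Hd1 HSH]].
  set (eta := Rmin 1 (e2 / (2 * (UB + 1)))).
  assert (Heta : 0 < eta) by (unfold eta; apply Rmin_glb_lt; [lra|apply Rdiv_lt_0_compat; lra]).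
  assert (Heta1 : eta <= 1) by apply Rmin_l.
  assert (Heta2 : UB * eta <= e2 / 2).
  { assert (eta <= e2 / (2 * (UB + 1))) by apply Rmin_r.
    apply Rle_trans with (UB * (e2 / (2 * (UB + 1)))). apply Rmult_le_compat_l; lra.
    unfold Rdiv. rewrite Rinv_mult.
    replace (UB * (e2 * (/ 2 * / (UB + 1)))) with ((e2 / 2) * (UB / (UB + 1))) by (field; lra).
    assert (UB / (UB + 1) <= 1). { apply Rmult_le_reg_r with (UB + 1); [lra|]. unfold Rdiv; rewrite Rmult_assoc, Rinv_l; lra. }
    nra. }
  destruct (deriv_gauge w w' a b eta Heta Hw) as [d2 [Hd2 Hg]].
  set (d3 := fun t => e2 / (2 * (M + 1) * (Rabs (w' t) + 1))).
  assert (Hd3 : forall t, 0 < d3 t).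
  { intros t; unfold d3. pose proof (Rabs_pos (w' t)). apply Rdiv_lt_0_compat; [lra|].
    apply Rmult_lt_0_compat; lra. }
  exists (fun t => Rmin (d1 t) (Rmin (d2 t) (d3 t))). split.
  { intros; repeat apply Rmin_glb_lt; auto. }
  intros P HP.
  eapply Rle_lt_trans; [apply (rsum_dsum _ (fun t => U t * w t) _ a b P HP)|].
  eapply Rle_lt_trans.
  apply (dsum_compare _ (fun t => U t * w t) u U W e2 _ a b P HW0 HP).
  - intros a' t x H1 H2 H3 H4 H5.
    assert (Hdd1 : x - a' < d1 t) by (eapply Rlt_le_trans; [apply H5| apply Rmin_l]).
    assert (Hdd2 : x - a' < d2 t) by (eapply Rlt_le_trans; [apply H5| eapply Rle_trans; [apply Rmin_r|apply Rmin_l]]).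
    assert (Hdd3 : x - a' < d3 t) by (eapply Rlt_le_trans; [apply H5| eapply Rle_trans; [apply Rmin_r|apply Rmin_r]]).
    assert (K1 := Hg t ltac:(lra) x ltac:(rewrite Rabs_right; lra)).
    assert (K2 := Hg t ltac:(lra) a' ltac:(rewrite Rabs_left1; lra)).
    rewrite (Rabs_right (x - t)) in K1 by lra. rewrite (Rabs_left1 (a' - t)) in K2 by lra.
    assert (L1 := HLip t x ltac:(lra) ltac:(lra) ltac:(lra)).
    assert (L2 := HLip a' t ltac:(lra) ltac:(lra) ltac:(lra)).
    assert (Wt := HW t ltac:(lra)). assert (Ut := HUB t ltac:(lra)).
    set (A1 := u t * (x - a') - (U x - U a')) in *.
    set (B1 := w x - w t - w' t * (x - t)) in *.
    set (B2 := w a' - w t - w' t * (a' - t)) in *.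
    replace ((u t * w t + U t * w' t) * (x - a') - (U x * w x - U a' * w a')) with
      (w t * A1 - (U x - U t) * (w x - w t) + (U a' - U t) * (w a' - w t) - U t * (B1 - B2))
      by (unfold A1, B1, B2; ring).
    assert (Hwx : Rabs (w x - w t) <= (Rabs (w' t) + 1) * (x - t)).
    { replace (w x - w t) with (B1 + w' t * (x - t)) by (unfold B1; ring).
      eapply Rle_trans; [apply Rabs_triang|]. rewrite Rabs_mult, (Rabs_right (x - t)) by lra. nra. }
    assert (Hwa : Rabs (w a' - w t) <= (Rabs (w' t) + 1) * (t - a')).
    { replace (w a' - w t) with (B2 + w' t * (a' - t)) by (unfold B2; ring).
      eapply Rle_trans; [apply Rabs_triang|]. rewrite Rabs_mult, (Rabs_left1 (a' - t)) by lra. nra. }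
    assert (Hd3' : (M + 1) * (Rabs (w' t) + 1) * (x - a') <= e2 / 2).
    { unfold d3 in Hdd3. pose proof (Rabs_pos (w' t)).
      assert (0 < 2 * (M + 1) * (Rabs (w' t) + 1)) by (apply Rmult_lt_0_compat; lra).
      apply Rmult_lt_compat_l with (r := 2 * (M + 1) * (Rabs (w' t) + 1)) in Hdd3; auto.
      replace (2 * (M + 1) * (Rabs (w' t) + 1) * (e2 / (2 * (M + 1) * (Rabs (w' t) + 1)))) with e2 in Hdd3 by (field; lra).
      lra. }
    assert (P1 : Rabs ((U x - U t) * (w x - w t)) <= e2 / 2 * (x - t)).
    { rewrite Rabs_mult. pose proof (Rabs_pos (w' t)).
      apply Rle_trans with ((M * (x - a')) * ((Rabs (w' t) + 1) * (x - t))).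
      apply Rmult_le_compat; try apply Rabs_pos.
      apply Rle_trans with (M * (x - t)); auto. apply Rmult_le_compat_l; lra. auto.
      assert (M * (x - a') * (Rabs (w' t) + 1) <= e2 / 2).
      { apply Rle_trans with ((M + 1) * (Rabs (w' t) + 1) * (x - a')); auto.
        replace (M * (x - a') * (Rabs (w' t) + 1)) with (M * (Rabs (w' t) + 1) * (x - a')) by ring.
        apply Rmult_le_compat_r; [lra|]. apply Rmult_le_compat_r; lra. }
      replace (M * (x - a') * ((Rabs (w' t) + 1) * (x - t))) with ((M * (x - a') * (Rabs (w' t) + 1)) * (x - t)) by ring.
      apply Rmult_le_compat_r; lra. }
    assert (P2 : Rabs ((U a' - U t) * (w a' - w t)) <= e2 / 2 * (t - a')).
    { rewrite Rabs_mult. pose proof (Rabs_pos (w' t)).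
      replace (U a' - U t) with (- (U t - U a')) by ring. rewrite Rabs_Ropp.
      apply Rle_trans with ((M * (x - a')) * ((Rabs (w' t) + 1) * (t - a'))).
      apply Rmult_le_compat; try apply Rabs_pos.
      apply Rle_trans with (M * (t - a')); auto. apply Rmult_le_compat_l; lra. auto.
      assert (M * (x - a') * (Rabs (w' t) + 1) <= e2 / 2).
      { apply Rle_trans with ((M + 1) * (Rabs (w' t) + 1) * (x - a')); auto.
        replace (M * (x - a') * (Rabs (w' t) + 1)) with (M * (Rabs (w' t) + 1) * (x - a')) by ring.
        apply Rmult_le_compat_r; [lra|]. apply Rmult_le_compat_r; lra. }
      replace (M * (x - a') * ((Rabs (w' t) + 1) * (t - a'))) with ((M * (x - a') * (Rabs (w' t) + 1)) * (t - a')) by ring.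
      apply Rmult_le_compat_r; lra. }
    assert (P3 : Rabs (U t * (B1 - B2)) <= e2 / 2 * (x - a')).
    { rewrite Rabs_mult. apply Rle_trans with (UB * (eta * (x - t) + eta * (t - a'))).
      apply Rmult_le_compat; try apply Rabs_pos; auto.
      eapply Rle_trans; [apply Rabs_triang|]. rewrite Rabs_Ropp. lra.
      nra. }
    assert (P4 : Rabs (w t * A1) <= W * Rabs A1) by (rewrite Rabs_mult; apply Rmult_le_compat_r; [apply Rabs_pos|auto]).
    eapply Rle_trans; [apply Rabs_triang|].
    eapply Rle_trans; [apply Rplus_le_compat_r; apply Rabs_triang|].
    eapply Rle_trans; [apply Rplus_le_compat_r; apply Rplus_le_compat_r; apply Rabs_triang|].
    rewrite !Rabs_Ropp. lra.
  - assert (W * dsum u U a P <= W * e1).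
    { apply Rmult_le_compat_l; auto. apply HSH. eapply fine_part_mono; [|apply HP]. intros; apply Rmin_l. }
    assert (W * e1 < e / 2).
    { unfold e1. replace (W * (e / (2 * (W + 1)))) with ((e/2) * (W / (W + 1))) by (field; lra).
      assert (W / (W + 1) < 1). { apply Rmult_lt_reg_r with (W + 1); [lra|]. unfold Rdiv; rewrite Rmult_assoc, Rinv_l; lra. }
      nra. }
    assert (e2 * (b - a) <= e / 4).
    { unfold e2. replace (e / (4 * (b - a + 1)) * (b - a)) with ((e / 4) * ((b - a) / (b - a + 1))) by (field; lra).
      assert ((b - a) / (b - a + 1) <= 1). { apply Rmult_le_reg_r with (b - a + 1); [lra|]. unfold Rdiv; rewrite Rmult_assoc, Rinv_l; lra. }
      nra. }
    lra.
Qed.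

Fixpoint ispart (a b : R) (P : list (R*R)) : Prop :=
  match P with nil => a = b | (t,x)::P' => a < x /\ ispart x b P' end.

Lemma ispart_le a b P : ispart a b P -> a <= b.
Proof.
  revert a; induction P as [|[t x] P IH]; simpl; intros a H; [lra|].
  destruct H. specialize (IH _ H0). lra.
Qed.

Lemma fine_ispart d a b P : fine_part d a b P -> ispart a b P.
Proof.
  revert a; induction P as [|[t x] P IH]; simpl; intros a H; auto.
  destruct H as (?&?&?&?). split; auto.
Qed.

Section Osc.
Variables (h Phi : R -> R) (a0 b0 : R).
Hypothesis Hmono : forall x y, a0 <= x -> x <= y -> y <= b0 -> Phi x <= Phi y.
Hypothesis Hosc : forall x s t y, a0 <= x -> x <= s -> s <= y -> x <= t -> t <= y -> y <= b0 ->
  Rabs (h s - h t) <= Phi y - Phi x.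

Fixpoint Lo (a : R) (P : list (R*R)) : R := match P with nil => 0 | (t,x)::P' => (h a - (Phi x - Phi a)) * (x - a) + Lo x P' end.
Fixpoint Up (a : R) (P : list (R*R)) : R := match P with nil => 0 | (t,x)::P' => (h a + (Phi x - Phi a)) * (x - a) + Up x P' end.

Lemma sandwich d a P : a0 <= a -> fine_part d a b0 P -> Lo a P <= rsum h a P <= Up a P.
Proof.
  revert a; induction P as [|[t x] P IH]; simpl; intros a Ha HP; [lra|].
  destruct HP as (?&?&?&?). pose proof (fine_part_le _ _ _ _ H2).
  specialize (IH x ltac:(lra) H2).
  assert (K := Hosc a t a x ltac:(lra) ltac:(lra) ltac:(lra) ltac:(lra) ltac:(lra) ltac:(lra)).
  apply Rabs_def2b in K || (pose proof (Rle_abs (h t - h a)); pose proof (Rle_abs (-(h t - h a))); rewrite Rabs_Ropp in *).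
  split; nra.
Qed.

Lemma gap c a P : a0 <= a -> fine_part (fun _ => c) a b0 P -> Up a P - Lo a P <= 2 * c * (Phi b0 - Phi a).
Proof.
  revert a; induction P as [|[t x] P IH]; simpl; intros a Ha HP.
  - subst; lra.
  - destruct HP as (?&?&?&?). pose proof (fine_part_le _ _ _ _ H2).
    specialize (IH x ltac:(lra) H2).
    assert (Phi a <= Phi x) by (apply Hmono; lra).
    assert ((Phi x - Phi a) * (x - a) <= (Phi x - Phi a) * c) by (apply Rmult_le_compat_l; lra).
    nra.
Qed.

Lemma LoUp : forall N P Q a, (length P + length Q <= N)%nat -> a0 <= a ->
  ispart a b0 P -> ispart a b0 Q -> Lo a P <= Up a Q.
Proof.
  induction N as [|N IH]; intros P Q a HN Ha HP HQ.
  - destruct P; destruct Q; simpl in HN; try lia. simpl; lra.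
  - destruct P as [|[t x] P']; destruct Q as [|[s y] Q'].
    + simpl; lra.
    + simpl in HP, HQ. destruct HQ as [HQ1 HQ2]. pose proof (ispart_le _ _ _ HQ2). lra.
    + simpl in HP, HQ. destruct HP as [HP1 HP2]. pose proof (ispart_le _ _ _ HP2). lra.
    + simpl in HP, HQ. destruct HP as [HP1 HP2]. destruct HQ as [HQ1 HQ2].
      pose proof (ispart_le _ _ _ HP2). pose proof (ispart_le _ _ _ HQ2).
      simpl in HN.
      destruct (Rle_lt_dec x y) as [Hxy|Hxy].
      * destruct (Req_dec x y) as [<-|Hxy'].
        -- simpl. assert (Lo x P' <= Up x Q') by (apply IH; auto; lia || lra).
           assert (Phi a <= Phi x) by (apply Hmono; lra). nra.
        -- assert (Lo x P' <= Up x ((s,y)::Q')).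
           { apply IH; auto. simpl; lia. lra. simpl; split; auto; lra. }
           simpl in *.
           assert (Phi a <= Phi x) by (apply Hmono; lra).
           assert (Phi x <= Phi y) by (apply Hmono; lra).
           assert (K := Hosc a x a x ltac:(lra) ltac:(lra) ltac:(lra) ltac:(lra) ltac:(lra) ltac:(lra)).
           pose proof (Rle_abs (h x - h a)).
           nra.
      * assert (Lo y ((t,x)::P') <= Up y Q').
        { apply IH; auto. simpl; lia. lra. simpl; split; auto; lra. }
        simpl in *.
        assert (Phi a <= Phi y) by (apply Hmono; lra).
        assert (Phi y <= Phi x) by (apply Hmono; lra).
        assert (K := Hosc a y a y ltac:(lra) ltac:(lra) ltac:(lra) ltac:(lra) ltac:(lra) ltac:(lra)).
        pose proof (Rle_abs (-(h y - h a))) as K'. rewrite Rabs_Ropp in K'.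
        nra.
Qed.

Lemma rsum_close c1 c2 P Q : 0 < c1 -> 0 < c2 -> a0 <= b0 ->
  fine_part (fun _ => c1) a0 b0 P -> fine_part (fun _ => c2) a0 b0 Q ->
  rsum h a0 P - rsum h a0 Q <= 2 * (c1 + c2) * (Phi b0 - Phi a0).
Proof.
  intros Hc1 Hc2 Hab HP HQ.
  pose proof (sandwich _ a0 P (Rle_refl _) HP). pose proof (sandwich _ a0 Q (Rle_refl _) HQ).
  pose proof (gap c1 a0 P (Rle_refl _) HP). pose proof (gap c2 a0 Q (Rle_refl _) HQ).
  pose proof (LoUp _ P Q a0 (le_n _) (Rle_refl _) (fine_ispart _ _ _ _ HP) (fine_ispart _ _ _ _ HQ)).
  lra.
Qed.

End Osc.

Lemma small_inv e : 0 < e -> exists N : nat, forall n, (N <= n)%nat -> / (INR n + 1) < e.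
Proof.
  intros He. destruct (archimed (/ e)) as [H1 H2].
  exists (Z.to_nat (up (/ e))). intros n Hn.
  assert (0 < / e) by (apply Rinv_0_lt_compat; auto).
  assert (IZR (up (/ e)) <= INR n).
  { apply le_INR in Hn. rewrite INR_IZR_INZ in Hn. rewrite Z2Nat.id in Hn; auto.
    apply le_IZR. lra. }
  assert (/ e < INR n + 1) by lra.
  apply Rinv_lt_contravar in H3. rewrite Rinv_inv in H3; auto. apply Rmult_lt_0_compat; lra.
Qed.

Lemma HKint_aa g a : HKint g a a 0.
Proof.
  intros e He. exists (fun _ => 1); split; [intros; lra|].
  intros [|[t x] P] HP; simpl in *. rewrite Rminus_diag, Rabs_R0; auto.
  destruct HP as (?&?&?&?). pose proof (fine_part_le _ _ _ _ H2). lra.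
Qed.

Theorem osc_integrable h Phi a b : a <= b ->
  (forall x y, a <= x -> x <= y -> y <= b -> Phi x <= Phi y) ->
  (forall x s t y, a <= x -> x <= s -> s <= y -> x <= t -> t <= y -> y <= b ->
     Rabs (h s - h t) <= Phi y - Phi x) ->
  exists I, HKint h a b I.
Proof.
  intros Hab Hmono Hosc.
  destruct (Req_dec a b) as [<-|Hab']. exists 0; apply HKint_aa.
  set (D := Phi b - Phi a).
  assert (HD : 0 <= D) by (unfold D; assert (Phi a <= Phi b) by (apply Hmono; lra); lra).
  assert (Hex : forall m : nat, exists P, fine_part (fun _ => / (INR m + 1)) a b P).
  { intros m. apply cousin; auto. intros; apply Rinv_0_lt_compat. pose proof (pos_INR m); lra. }
  set (Pm := fun m => proj1_sig (constructive_indefinite_description _ (Hex m))).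
  assert (HPm : forall m, fine_part (fun _ => / (INR m + 1)) a b (Pm m)).
  { intros m. unfold Pm. destruct (constructive_indefinite_description _ (Hex m)); auto. }
  assert (Hpos : forall m, 0 < / (INR m + 1)) by (intros; apply Rinv_0_lt_compat; pose proof (pos_INR m); lra).
  set (s := fun m => rsum h a (Pm m)).
  assert (Hclose : forall c P m, 0 < c -> fine_part (fun _ => c) a b P ->
     Rabs (rsum h a P - s m) <= 2 * (c + / (INR m + 1)) * D).
  { intros c P m Hc HP. apply Rabs_le. split.
    - pose proof (rsum_close h Phi a b Hmono Hosc _ _ (Pm m) P (Hpos m) Hc Hab (HPm m) HP).
      unfold s, D in *. lra.
    - pose proof (rsum_close h Phi a b Hmono Hosc _ _ P (Pm m) Hc (Hpos m) Hab HP (HPm m)).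
      unfold s, D in *. lra. }
  assert (Hcauchy : Cauchy_crit s).
  { intros e He. destruct (small_inv (e / (4 * D + 4))) as [N HN].
    apply Rdiv_lt_0_compat; lra.
    exists N. intros n m Hn Hm. unfold R_dist.
    specialize (Hclose _ _ m (Hpos n) (HPm n)). fold (s n) in Hclose.
    pose proof (HN n Hn). pose proof (HN m Hm).
    assert (2 * (/ (INR n + 1) + / (INR m + 1)) * D <= 2 * (e / (4 * D + 4) + e / (4 * D + 4)) * D).
    { apply Rmult_le_compat_r; auto. pose proof (Hpos n); pose proof (Hpos m). lra. }
    assert (2 * (e / (4 * D + 4) + e / (4 * D + 4)) * D < e).
    { replace (2 * (e / (4 * D + 4) + e / (4 * D + 4)) * D) with (e * (D / (D + 1))) by (field; lra).
      assert (D / (D + 1) < 1). { apply Rmult_lt_reg_r with (D + 1); [lra|]. unfold Rdiv; rewrite Rmult_assoc, Rinv_l; lra. }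
      nra. }
    lra. }
  destruct (R_complete s Hcauchy) as [I HI].
  exists I. intros e He.
  set (c := e / (8 * D + 8)).
  assert (Hc : 0 < c) by (unfold c; apply Rdiv_lt_0_compat; lra).
  exists (fun _ => c). split; auto. intros P HP.
  destruct (HI (e / 4) ltac:(lra)) as [N1 HN1].
  destruct (small_inv c Hc) as [N2 HN2].
  set (m := (N1 + N2)%nat).
  specialize (HN1 m ltac:(unfold m; lia)). specialize (HN2 m ltac:(unfold m; lia)).
  unfold R_dist in HN1. specialize (Hclose c P m Hc HP).
  assert (2 * (c + / (INR m + 1)) * D <= 4 * c * D).
  { replace (4 * c * D) with (2 * (c + c) * D) by ring. apply Rmult_le_compat_r; auto. lra. }
  assert (4 * c * D < e / 2).
  { unfold c. replace (4 * (e / (8 * D + 8)) * D) with ((e / 2) * (D / (D + 1))) by (field; lra).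
    assert (D / (D + 1) < 1). { apply Rmult_lt_reg_r with (D + 1); [lra|]. unfold Rdiv; rewrite Rmult_assoc, Rinv_l; lra. }
    nra. }
  replace (rsum h a P - I) with ((rsum h a P - s m) + (s m - I)) by ring.
  eapply Rle_lt_trans; [apply Rabs_triang|]. lra.
Qed.

Definition eqn (n : nat) (x y : nat -> R) := forall i, (i < n)%nat -> x i = y i.
Fixpoint sumabs (n : nat) (x : nat -> R) : R :=
  match n with O => 0 | S m => sumabs m x + Rabs (x m) end.

Lemma eqn_S n x y : eqn (S n) x y -> eqn n x y.
Proof. intros H i Hi. apply H; lia. Qed.

Lemma dot_eqn n x x' y y' : eqn n x x' -> eqn n y y' -> dot n x y = dot n x' y'.
Proof.
  induction n as [|n IH]; simpl; intros H1 H2; auto.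
  rewrite IH by (eapply eqn_S; eauto). rewrite (H1 n), (H2 n) by lia. auto.
Qed.

Lemma dot_comm n x y : dot n x y = dot n y x.
Proof. induction n; simpl; auto. rewrite IHn; ring. Qed.

Lemma dot_vsub_l n x y z : dot n (vsub x y) z = dot n x z - dot n y z.
Proof. induction n; simpl; [ring|]. rewrite IHn. unfold vsub; ring. Qed.
Lemma dot_vscale_l n c x z : dot n (vscale c x) z = c * dot n x z.
Proof. induction n; simpl; [ring|]. rewrite IHn. unfold vscale; ring. Qed.
Lemma dot_vsub_r n x y z : dot n z (vsub x y) = dot n z x - dot n z y.
Proof. rewrite !(dot_comm n z). apply dot_vsub_l. Qed.
Lemma dot_vscale_r n c x z : dot n z (vscale c x) = c * dot n z x.
Proof. rewrite !(dot_comm n z). apply dot_vscale_l. Qed.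
Lemma dot_plus_l n x y z : dot n (fun i => x i + y i) z = dot n x z + dot n y z.
Proof. induction n; simpl; [ring|]. rewrite IHn. ring. Qed.
Lemma dot_plus_r n x y z : dot n z (fun i => x i + y i) = dot n z x + dot n z y.
Proof. rewrite !(dot_comm n z). apply dot_plus_l. Qed.
Lemma dot_scal_l n c x z : dot n (fun i => c * x i) z = c * dot n x z.
Proof. apply dot_vscale_l. Qed.
Lemma dot_scal_r n c x z : dot n z (fun i => c * x i) = c * dot n z x.
Proof. apply dot_vscale_r. Qed.

Lemma dot_nonneg n x : 0 <= dot n x x.
Proof. induction n; simpl; [lra|]. pose proof (Rle_0_sqr (x n)). unfold Rsqr in H. lra. Qed.

Lemma dot_zero n x : dot n x x = 0 -> eqn n x (fun _ => 0).
Proof.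
  induction n as [|n IH]; simpl; intros H i Hi; [lia|].
  pose proof (dot_nonneg n x). pose proof (Rle_0_sqr (x n)). unfold Rsqr in H1.
  assert (dot n x x = 0) by lra. assert (x n * x n = 0) by lra.
  destruct (Nat.eq_dec i n) as [->|Hin]. apply Rmult_integral in H3; lra.
  apply IH; auto; lia.
Qed.

Lemma dot_zero_l n x y : eqn n x (fun _ => 0) -> dot n x y = 0.
Proof.
  intros H. rewrite (dot_eqn n x (fun _ => 0) y y); auto. 2: intros i _; auto.
  clear. induction n; simpl; auto. rewrite IHn; ring.
Qed.

Lemma rc_eqn n u u' x x' : eqn n u u' -> eqn n x x' ->
  eqn n (remove_comp n u x) (remove_comp n u' x').
Proof.
  intros Hu Hx. unfold remove_comp.
  rewrite (dot_eqn n u u' u u'); auto. rewrite (dot_eqn n x x' u u'); auto.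
  destruct (Req_EM_T (dot n u' u') 0); auto.
  intros i Hi. unfold vsub, vscale. rewrite Hx, Hu; auto.
Qed.


Lemma rc_residual n u z c :
  dot n (remove_comp n u z) (remove_comp n u z) <=
  dot n (vsub z (vscale c u)) (vsub z (vscale c u)).
Proof.
  unfold remove_comp. destruct (Req_EM_T (dot n u u) 0) as [H0|H0].
  - pose proof (dot_zero n u H0).
    rewrite !dot_vsub_l, !dot_vsub_r, !dot_vscale_l, !dot_vscale_r.
    rewrite (dot_zero_l n u z), (dot_zero_l n u u) by auto. rewrite (dot_comm n z u), (dot_zero_l n u z) by auto. lra.
  - pose proof (dot_nonneg n u). assert (Hp : 0 < dot n u u) by lra.
    rewrite !dot_vsub_l, !dot_vsub_r, !dot_vscale_l, !dot_vscale_r.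
    rewrite (dot_comm n u z).
    set (A := dot n z z). set (B := dot n z u). set (D := dot n u u).
    assert (0 <= (c * D - B) * (c * D - B) / D) by (apply Rmult_le_pos; [apply Rle_0_sqr|apply Rlt_le, Rinv_0_lt_compat; auto]).
    replace (A - B / D * B - (B / D * B - B / D * (B / D * D))) with (A - B * B / D) by (field; auto).
    replace (A - c * B - (c * B - c * (c * D))) with (A - B * B / D + (c * D - B) * (c * D - B) / D) by (field; auto).
    lra.
Qed.

Lemma cauchy_schwarz n x y : (dot n x y) * (dot n x y) <= dot n x x * dot n y y.
Proof.
  destruct (Req_dec (dot n y y) 0) as [H0|H0].
  - rewrite (dot_comm n x y), (dot_zero_l n y x) by (apply dot_zero; auto). rewrite H0; lra.
  - pose proof (dot_nonneg n y). assert (Hp : 0 < dot n y y) by lra.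
    pose proof (dot_nonneg n (remove_comp n y x)).
    unfold remove_comp in H1. destruct (Req_EM_T (dot n y y) 0); [lra|].
    rewrite !dot_vsub_l, !dot_vsub_r, !dot_vscale_l, !dot_vscale_r in H1.
    rewrite (dot_comm n y x) in H1.
    set (A := dot n x x) in *. set (B := dot n x y) in *. set (D := dot n y y) in *.
    replace (A - B / D * B - (B / D * B - B / D * (B / D * D))) with (A - B * B / D) in H1 by (field; auto).
    assert (B * B / D <= A) by lra.
    apply Rmult_le_compat_r with (r := D) in H2; [|lra].
    replace (B * B / D * D) with (B * B) in H2 by (field; auto). lra.
Qed.

Lemma sumabs_nonneg n x : 0 <= sumabs n x.
Proof. induction n; simpl; [lra|]. pose proof (Rabs_pos (x n)); lra. Qed.

Lemma dot_le_sumabs n e : dot n e e <= sumabs n e * sumabs n e.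
Proof.
  induction n; simpl; [lra|].
  pose proof (sumabs_nonneg n e). pose proof (Rabs_pos (e n)).
  assert (e n * e n = Rabs (e n) * Rabs (e n)) by (rewrite <- Rabs_mult; rewrite Rabs_right; [auto|apply Rle_ge, Rle_0_sqr]).
  nra.
Qed.

Lemma dot_abs_bound n x y Mx : (forall i, (i < n)%nat -> Rabs (x i) <= Mx) ->
  Rabs (dot n x y) <= Mx * sumabs n y.
Proof.
  induction n as [|n IH]; simpl; intros H. rewrite Rabs_R0; lra.
  eapply Rle_trans; [apply Rabs_triang|]. rewrite Rabs_mult.
  assert (Rabs (x n) <= Mx) by (apply H; lia).
  assert (Rabs (dot n x y) <= Mx * sumabs n y) by (apply IH; intros; apply H; lia).
  pose proof (Rabs_pos (y n)). nra.
Qed.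

Lemma sumabs_eqn n x y : eqn n x y -> sumabs n x = sumabs n y.
Proof.
  induction n; simpl; intros H; auto. rewrite IHn by (eapply eqn_S; eauto). rewrite (H n) by lia; auto.
Qed.

Lemma dot_unit n x i c : (i < n)%nat -> dot n x (fun j => if Nat.eqb j i then c else 0) = x i * c.
Proof.
  induction n as [|n IH]; intros Hi; [lia|]. simpl.
  destruct (Nat.eq_dec i n) as [->|Hin].
  - rewrite Nat.eqb_refl. rewrite (dot_comm n x), (dot_zero_l n (fun j => if Nat.eqb j n then c else 0) x). ring.
    intros j Hj. destruct (Nat.eqb_spec j n); auto; lia.
  - rewrite IH by lia. destruct (Nat.eqb_spec n i); [lia|]. ring.
Qed.

Lemma rc_combo n V x a b y : dot n V V <> 0 ->
  eqn n x (fun i => a * V i + b * y i) ->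
  eqn n (remove_comp n V x) (vscale b (remove_comp n V y)).
Proof.
  intros HV Hx i Hi. unfold remove_comp. destruct (Req_EM_T (dot n V V) 0); [contradiction|].
  unfold vsub, vscale. rewrite (dot_eqn n x (fun i => a * V i + b * y i) V V); auto; [|intros j _; auto].
  rewrite dot_plus_l, dot_scal_l, dot_scal_l. rewrite Hx by auto. field. auto.
Qed.

Lemma rc_sub n V W v : remove_comp n V W = fun i => remove_comp n V v i + remove_comp n V (vsub W v) i.
Proof.
  apply functional_extensionality; intros i. unfold remove_comp.
  destruct (Req_EM_T (dot n V V) 0). unfold vsub; ring.
  rewrite dot_vsub_l. unfold vsub, vscale. field. auto.
Qed.

Theorem P_bound n V W x v a g y : dot n V V <> 0 ->
  eqn n x (fun i => a * V i + g * v i) ->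
  dot n (proj_perp n V W x) y * dot n (proj_perp n V W x) y <=
  g * g * dot n (vsub W v) (vsub W v) * dot n y y.
Proof.
  intros HV Hx. unfold proj_perp.
  set (Wp := remove_comp n V W). set (vh := remove_comp n V v). set (eh := remove_comp n V (vsub W v)).
  set (P := remove_comp n Wp (remove_comp n V x)).
  assert (HP : eqn n P (remove_comp n Wp (vscale g vh))).
  { apply rc_eqn. intros i _; auto. apply rc_combo with a; auto. }
  assert (HWp : Wp = fun i => vh i + eh i) by (unfold Wp, vh, eh; apply rc_sub).
  assert (H1 : dot n P P <= g * g * dot n eh eh).
  { rewrite (dot_eqn n P _ P _ HP HP).
    eapply Rle_trans; [apply (rc_residual n Wp (vscale g vh) g)|].
    rewrite (dot_eqn n (vsub (vscale g vh) (vscale g Wp)) (vscale (-g) eh) _ (vscale (-g) eh)).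
    rewrite dot_vscale_l, dot_vscale_r. lra.
    all: intros i _; unfold vsub, vscale; rewrite HWp; ring. }
  assert (H2 : dot n eh eh <= dot n (vsub W v) (vsub W v)).
  { unfold eh. eapply Rle_trans; [apply (rc_residual n V (vsub W v) 0)|].
    right. apply dot_eqn; intros i _; unfold vsub, vscale; ring. }
  pose proof (cauchy_schwarz n P y). pose proof (dot_nonneg n y). pose proof (dot_nonneg n eh).
  assert (dot n P P * dot n y y <= g * g * dot n eh eh * dot n y y) by (apply Rmult_le_compat_r; auto).
  assert (g * g * dot n eh eh <= g * g * dot n (vsub W v) (vsub W v)) by (apply Rmult_le_compat_l; [apply Rle_0_sqr|auto]).
  assert (g * g * dot n eh eh * dot n y y <= g * g * dot n (vsub W v) (vsub W v) * dot n y y) by (apply Rmult_le_compat_r; auto).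
  lra.
Qed.

Lemma rc_scale n u c x : remove_comp n u (vscale c x) = vscale c (remove_comp n u x).
Proof.
  apply functional_extensionality; intros i. unfold remove_comp.
  destruct (Req_EM_T (dot n u u) 0). unfold vscale; auto.
  rewrite dot_vscale_l. unfold vsub, vscale. field. auto.
Qed.

Lemma proj_perp_scale n V W c x : proj_perp n V W (vscale c x) = vscale c (proj_perp n V W x).
Proof. unfold proj_perp. rewrite rc_scale, rc_scale. auto. Qed.

Lemma proj_perp_zero n V W x : eqn n x (fun _ => 0) -> eqn n (proj_perp n V W x) (fun _ => 0).
Proof.
  intros Hx. unfold proj_perp.
  assert (forall u z, eqn n z (fun _ => 0) -> eqn n (remove_comp n u z) (fun _ => 0)).
  { intros u z Hz i Hi. unfold remove_comp. destruct (Req_EM_T (dot n u u) 0). apply Hz; auto.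
    unfold vsub, vscale. rewrite (dot_zero_l n z u Hz). rewrite Hz by auto. field. auto. }
  apply H, H, Hx.
Qed.

Fixpoint lastc (x0 : R) (l : list R) : R := match l with nil => x0 | y :: l' => lastc y l' end.

Lemma chain_mono b b' x0 l : b <= b' -> chain_in b x0 l -> chain_in b' x0 l.
Proof.
  revert x0; induction l as [|y l IH]; simpl; intros x0 Hb H; auto.
  destruct H as (?&?&?). repeat split; auto; lra.
Qed.

Lemma chain_last b x0 l : chain_in b x0 l -> l <> nil -> lastc x0 l <= b.
Proof.
  revert x0; induction l as [|y l IH]; simpl; intros x0 H Hn; [congruence|].
  destruct H as (?&?&?). destruct l as [|z l']. simpl; auto. apply IH; auto. discriminate.
Qed.

Lemma chain_app2 b x0 l s t : chain_in b x0 l -> lastc x0 l <= s -> s <= t -> t <= b ->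
  chain_in b x0 (l ++ s :: t :: nil).
Proof.
  revert x0; induction l as [|y l IH]; simpl; intros x0 H H1 H2 H3.
  - repeat split; lra.
  - destruct H as (?&?&?). repeat split; auto.
Qed.

Lemma variation_app beta x0 l m : variation beta x0 (l ++ m) = variation beta x0 l + variation beta (lastc x0 l) m.
Proof.
  revert x0; induction l as [|y l IH]; simpl; intros x0; [ring|]. rewrite IH; ring.
Qed.

Definition varset (beta : R -> R) (x v : R) : Prop :=
  exists x0 l, 0 <= x0 /\ chain_in x x0 l /\ v = variation beta x0 l.

Definition Vfun (beta : R -> R) (x : R) : R :=
  epsilon (inhabits 0) (fun s => is_lub (varset beta x) s).

Section BV.
Variables (beta : R -> R) (L Vb : R).
Hypothesis HBV : forall x0 l, 0 <= x0 -> chain_in L x0 l -> variation beta x0 l <= Vb.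

Lemma Vfun_lub x : x <= L -> is_lub (varset beta x) (Vfun beta x).
Proof.
  intros Hx. unfold Vfun. apply epsilon_spec.
  assert (Hb : bound (varset beta x)).
  { exists Vb. intros v (x0 & l & H1 & H2 & ->). apply HBV; auto. eapply chain_mono; eauto. }
  assert (Hn : exists v, varset beta x v).
  { exists 0. exists 0, nil. simpl; repeat split; auto; lra. }
  destruct (completeness _ Hb Hn) as [m Hm]. exists m; auto.
Qed.
Lemma Vfun_step x s t y : 0 <= x -> x <= s -> s <= t -> t <= y -> y <= L ->
  Vfun beta x + Rabs (beta t - beta s) <= Vfun beta y.
Proof.
  intros H0 H1 H2 H3 H4.
  destruct (Vfun_lub x ltac:(lra)) as [Ux Lx]. destruct (Vfun_lub y H4) as [Uy Ly].
  assert (Hst : Rabs (beta t - beta s) <= Vfun beta y).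
  { apply Uy. exists s, (t :: nil). simpl. repeat split; try lra. }
  assert (is_upper_bound (varset beta x) (Vfun beta y - Rabs (beta t - beta s))).
  { intros v (x0 & l & Hx0 & Hc & ->).
    destruct l as [|z l'].
    - simpl. lra.
    - assert (Hl := chain_last x x0 (z :: l') Hc ltac:(discriminate)).
      assert (variation beta x0 ((z :: l') ++ s :: t :: nil) <= Vfun beta y).
      { apply Uy. exists x0, ((z :: l') ++ s :: t :: nil). split; [auto|split; [|reflexivity]].
        apply chain_app2; try lra. eapply chain_mono; [|apply Hc]; lra. }
      rewrite variation_app in H. simpl in H.
      pose proof (Rabs_pos (beta s - beta (lastc z l'))). simpl in Hl. simpl. lra. }
  specialize (Lx _ H). lra.
Qed.

End BV.

Theorem bv_integrable beta L c Cc Kc Mb t1 :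
  (exists Vb, forall x0 l, 0 <= x0 -> chain_in L x0 l -> variation beta x0 l <= Vb) ->
  (forall t, 0 <= t <= L -> Rabs (beta t) <= Mb) ->
  (forall t, 0 <= t <= L -> Rabs (c t) <= Cc) ->
  (forall s t, 0 <= s <= L -> 0 <= t <= L -> Rabs (c s - c t) <= Kc * Rabs (s - t)) ->
  0 <= t1 <= L ->
  exists I, HKint (fun t => beta t * c t) 0 t1 I.
Proof.
  intros [Vb HBV] HMb HCc HKc Ht1.
  assert (HCc0 : 0 <= Cc) by (specialize (HCc 0 ltac:(lra)); pose proof (Rabs_pos (c 0)); lra).
  assert (HMb0 : 0 <= Mb) by (specialize (HMb 0 ltac:(lra)); pose proof (Rabs_pos (beta 0)); lra).
  assert (HKc' : forall s t, 0 <= s <= L -> 0 <= t <= L -> Rabs (c s - c t) <= Rabs Kc * Rabs (s - t)).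
  { intros s t Hs Ht. eapply Rle_trans; [apply HKc; auto|]. apply Rmult_le_compat_r; [apply Rabs_pos|apply Rle_abs]. }
  clear HKc. assert (HKc0 : 0 <= Rabs Kc) by apply Rabs_pos. set (Kc' := Rabs Kc) in *. clearbody Kc'. rename Kc' into K2.
  apply (osc_integrable _ (fun t => Cc * Vfun beta t + Mb * K2 * t)). lra.
  - intros x y H1 H2 H3.
    pose proof (Vfun_step beta L Vb HBV x y y y ltac:(lra) H2 ltac:(lra) ltac:(lra) ltac:(lra)).
    pose proof (Rabs_pos (beta y - beta y)).
    assert (Vfun beta x <= Vfun beta y) by lra.
    assert (Cc * Vfun beta x <= Cc * Vfun beta y) by (apply Rmult_le_compat_l; auto).
    assert (Mb * K2 * x <= Mb * K2 * y) by (apply Rmult_le_compat_l; [apply Rmult_le_pos|]; lra).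
    lra.
  - intros x s t y Hx Hxs Hsy Hxt Hty Hy.
    assert (Hb : Rabs (beta s - beta t) <= Vfun beta y - Vfun beta x).
    { destruct (Rle_lt_dec s t).
      - pose proof (Vfun_step beta L Vb HBV x s t y ltac:(lra) Hxs r Hty ltac:(lra)).
        rewrite <- Rabs_Ropp. replace (- (beta s - beta t)) with (beta t - beta s) by ring. lra.
      - pose proof (Vfun_step beta L Vb HBV x t s y ltac:(lra) Hxt ltac:(lra) Hsy ltac:(lra)). lra. }
    replace (beta s * c s - beta t * c t) with ((beta s - beta t) * c s + beta t * (c s - c t)) by ring.
    eapply Rle_trans; [apply Rabs_triang|]. rewrite !Rabs_mult.
    assert (Rabs (beta s - beta t) * Rabs (c s) <= (Vfun beta y - Vfun beta x) * Cc).
    { apply Rmult_le_compat; try apply Rabs_pos; auto. apply HCc; lra. }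
    assert (Rabs (beta t) * Rabs (c s - c t) <= Mb * (K2 * (y - x))).
    { apply Rmult_le_compat; try apply Rabs_pos. apply HMb; lra.
      eapply Rle_trans. apply HKc'; lra. apply Rmult_le_compat_l; auto. apply Rabs_le; lra. }
    lra.
Qed.

From Coquelicot Require Import Coquelicot.
Open Scope R_scope.
Set Bullet Behavior "Strict Subproofs".

Definition tower (D : nat -> R -> R) := forall j x, derivable_pt_lim (D j) x (D (S j) x).

Lemma dpl_local f g x l d : 0 < d -> (forall y, Rabs (y - x) < d -> f y = g y) ->
  derivable_pt_lim f x l -> derivable_pt_lim g x l.
Proof.
  intros Hd Hfg H e He. destruct (H e He) as [d1 Hd1].
  assert (Hm : 0 < Rmin d1 d) by (apply Rmin_glb_lt; [apply cond_pos|auto]).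
  exists (mkposreal _ Hm). intros h Hh Hhd. simpl in Hhd.
  rewrite <- (Hfg (x + h)), <- (Hfg x).
  apply Hd1; auto. eapply Rlt_le_trans; [apply Hhd| apply Rmin_l].
  rewrite Rminus_diag, Rabs_R0; auto.
  replace (x + h - x) with h by ring. eapply Rlt_le_trans; [apply Hhd| apply Rmin_r].
Qed.

Fixpoint peval (l : list R) (y : R) : R := match l with nil => 0 | c :: l' => c + y * peval l' y end.
Fixpoint padd (p q : list R) : list R :=
  match p, q with nil, _ => q | _, nil => p | a::p', b::q' => (a+b)::padd p' q' end.
Fixpoint pderiv (l : list R) : list R := match l with nil => nil | c :: l' => padd l' (0 :: pderiv l') end.
Definition pnext p := 0 :: 0 :: padd p (map Ropp (pderiv p)).
Fixpoint pj (j : nat) := match j with O => 1::nil | S j => pnext (pj j) end.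

Lemma peval_padd p q y : peval (padd p q) y = peval p y + peval q y.
Proof.
  revert q; induction p as [|a p IH]; intros [|b q]; simpl; try ring. rewrite IH; ring.
Qed.

Lemma peval_opp p y : peval (map Ropp p) y = - peval p y.
Proof. induction p as [|a p IH]; simpl; [ring|]. rewrite IH; ring. Qed.

Lemma peval_deriv l y : derivable_pt_lim (peval l) y (peval (pderiv l) y).
Proof.
  induction l as [|c l IH].
  - simpl. apply (derivable_pt_lim_const 0 y).
  - simpl. rewrite peval_padd. simpl.
    change (derivable_pt_lim (fct_cte c + id * peval l)%F y (peval l y + (0 + y * peval (pderiv l) y))).
    replace (peval l y + (0 + y * peval (pderiv l) y)) with (0 + (1 * peval l y + id y * peval (pderiv l) y)) by (unfold id; ring).
    apply derivable_pt_lim_plus. apply derivable_pt_lim_const.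
    apply derivable_pt_lim_mult; auto. apply derivable_pt_lim_id.
Qed.

Definition Ef (j : nat) (x : R) : R := if Rlt_dec 0 x then peval (pj j) (/ x) * exp (- / x) else 0.

Lemma G_deriv p x : 0 < x ->
  derivable_pt_lim (fun y => peval p (/ y) * exp (- / y)) x (peval (pnext p) (/ x) * exp (- / x)).
Proof.
  intros Hx. apply is_derive_Reals.
  assert (H1 : is_derive (fun y => peval p (/ y)) x (scal (- (1) / x ^ 2) (peval (pderiv p) (/ x)))).
  { apply (is_derive_comp (peval p) (fun y => / y)).
    apply is_derive_Reals, peval_deriv.
    auto_derive. lra. field; lra. }
  assert (H2 : is_derive (fun y => exp (- / y)) x (exp (- / x) * / x ^ 2)).
  { auto_derive. lra. field; lra. }
  eapply is_derive_ext. intros; reflexivity.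
  replace (peval (pnext p) (/ x) * exp (- / x)) with
    (scal (- (1) / x ^ 2) (peval (pderiv p) (/ x)) * exp (- / x) + peval p (/ x) * (exp (- / x) * / x ^ 2)).
  apply (is_derive_mult (fun y => peval p (/ y)) (fun y => exp (- / y))); auto.
  intros; apply Rmult_comm.
  unfold pnext. simpl. rewrite peval_padd, peval_opp. unfold scal; simpl; unfold mult; simpl.
  field. lra.
Qed.

Lemma exp_pow z n : exp z ^ n = exp (INR n * z).
Proof.
  induction n as [|n IH]. simpl. rewrite Rmult_0_l, exp_0; auto.
  rewrite S_INR. simpl. rewrite IH, <- exp_plus. f_equal; ring.
Qed.

Lemma pow_exp_small m e : 0 < e -> exists Y, 0 < Y /\ forall y, Y <= y -> y ^ m * exp (- y) < e.
Proof.
  intros He.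
  assert (HK : 0 < INR (S m)) by (apply lt_0_INR; lia).
  exists (INR (S m) ^ (S m) / e + 1). split.
  { assert (0 < INR (S m) ^ S m) by (apply pow_lt; auto). assert (0 < INR (S m) ^ S m / e) by (apply Rdiv_lt_0_compat; auto). lra. }
  intros y Hy.
  assert (0 < INR (S m) ^ S m) by (apply pow_lt; auto). assert (0 < INR (S m) ^ S m / e) by (apply Rdiv_lt_0_compat; auto).
  assert (Hy0 : 0 < y) by lra.
  assert (Hexp : (y / INR (S m)) ^ S m <= exp y).
  { replace y with (INR (S m) * (y / INR (S m))) at 2 by (field; lra).
    rewrite <- exp_pow. apply pow_incr. split. apply Rlt_le, Rdiv_lt_0_compat; auto.
    pose proof (exp_ineq1_le (y / INR (S m))). lra. }
  assert (y ^ m * exp (- y) * y <= INR (S m) ^ S m).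
  { rewrite exp_Ropp. replace ((y / INR (S m)) ^ S m) with (y ^ S m / INR (S m) ^ S m) in Hexp by (rewrite Rpow_mult_distr || (unfold Rdiv; rewrite Rpow_mult_distr, pow_inv; auto)).
    assert (0 < exp y) by apply exp_pos.
    apply Rmult_le_compat_r with (r := INR (S m) ^ S m / exp y) in Hexp; [|apply Rlt_le, Rdiv_lt_0_compat; auto].
    replace (exp y * (INR (S m) ^ S m / exp y)) with (INR (S m) ^ S m) in Hexp by (field; lra).
    replace (y ^ S m) with (y ^ m * y) in Hexp by (rewrite <- tech_pow_Rmult; ring).
    replace (y ^ m * y / INR (S m) ^ S m * (INR (S m) ^ S m / exp y)) with (y ^ m * / exp y * y) in Hexp by (field; split; lra).
    auto. }
  assert (y ^ m * exp (- y) * y < e * y).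
  { apply Rle_lt_trans with (INR (S m) ^ S m). auto.
    apply Rlt_le_trans with (e * (INR (S m) ^ S m / e + 1)). 
    replace (e * (INR (S m) ^ S m / e + 1)) with (INR (S m) ^ S m + e) by (field; lra). lra.
    apply Rmult_le_compat_l; lra. }
  apply Rmult_lt_reg_r with y; auto.
Qed.

Lemma poly_exp_small l : forall m e, 0 < e -> exists Y, 0 < Y /\ forall y, Y <= y ->
  Rabs (y ^ m * peval l y * exp (- y)) < e.
Proof.
  induction l as [|c l IH]; intros m e He.
  - exists 1; split; [lra|]. intros; simpl. rewrite Rmult_0_r, Rmult_0_l, Rabs_R0; auto.
  - destruct (IH (S m) (e/2) ltac:(lra)) as [Y1 [HY1 K1]].
    destruct (pow_exp_small m (e / (2 * (Rabs c + 1)))) as [Y2 [HY2 K2]].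
    { apply Rdiv_lt_0_compat; [lra|]. pose proof (Rabs_pos c); lra. }
    exists (Rmax Y1 Y2); split. eapply Rlt_le_trans; [apply HY1| apply Rmax_l].
    intros y Hy. specialize (K1 y ltac:(eapply Rle_trans; [apply Rmax_l|apply Hy])).
    specialize (K2 y ltac:(eapply Rle_trans; [apply Rmax_r|apply Hy])).
    simpl. replace (y ^ m * (c + y * peval l y) * exp (- y)) with
      (c * (y ^ m * exp (- y)) + y * y ^ m * peval l y * exp (- y)) by ring.
    eapply Rle_lt_trans; [apply Rabs_triang|]. simpl in K1.
    assert (Hy0 : 0 < y) by (apply Rlt_le_trans with Y1; auto; eapply Rle_trans; [apply Rmax_l|apply Hy]).
    assert (0 <= y ^ m * exp (- y)) by (apply Rmult_le_pos; [apply pow_le; lra| apply Rlt_le, exp_pos]).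
    rewrite Rabs_mult, (Rabs_right (y ^ m * exp (- y))) by lra.
    assert (Rabs c * (y ^ m * exp (- y)) <= Rabs c * (e / (2 * (Rabs c + 1)))).
    { apply Rmult_le_compat_l; [apply Rabs_pos|lra]. }
    assert (Rabs c * (e / (2 * (Rabs c + 1))) <= e / 2).
    { pose proof (Rabs_pos c). replace (Rabs c * (e / (2 * (Rabs c + 1)))) with ((e/2) * (Rabs c / (Rabs c + 1))) by (field; lra).
      assert (Rabs c / (Rabs c + 1) <= 1). { apply Rmult_le_reg_r with (Rabs c + 1); [lra|]. unfold Rdiv; rewrite Rmult_assoc, Rinv_l; lra. }
      nra. }
    lra.
Qed.

Lemma Ef_tower : tower Ef.
Proof.
  intros j x. destruct (Rlt_le_dec 0 x) as [Hx|Hx].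
  - apply dpl_local with (f := fun y => peval (pj j) (/ y) * exp (- / y)) (d := x); auto.
    intros y Hy. unfold Ef. destruct (Rlt_dec 0 y) as [|Hn]; auto.
    exfalso. apply Rabs_def2 in Hy. lra.
    replace (Ef (S j) x) with (peval (pnext (pj j)) (/ x) * exp (- / x)).
    apply G_deriv; auto. unfold Ef. destruct (Rlt_dec 0 x); [reflexivity| lra].
  - destruct (Rle_lt_or_eq_dec _ _ Hx) as [Hx'|Hx0]; [|rewrite Hx0].
    + apply dpl_local with (f := fct_cte 0) (d := - x). lra.
      intros y Hy. unfold Ef, fct_cte. destruct (Rlt_dec 0 y); auto. apply Rabs_def2 in Hy. lra.
      replace (Ef (S j) x) with 0. apply derivable_pt_lim_const.
      unfold Ef. destruct (Rlt_dec 0 x); auto. lra.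
    + replace (Ef (S j) 0) with 0 by (unfold Ef; destruct (Rlt_dec 0 0); auto; lra).
      intros e He. destruct (poly_exp_small (pj j) 1 e He) as [Y [HY KY]].
      assert (Hd : 0 < / Y) by (apply Rinv_0_lt_compat; auto).
      exists (mkposreal _ Hd). intros h Hh Hhd. simpl in Hhd.
      replace (Ef j 0) with 0 by (unfold Ef; destruct (Rlt_dec 0 0); auto; lra).
      rewrite Rplus_0_l. unfold Ef. destruct (Rlt_dec 0 h) as [Hh0|Hh0].
      * rewrite Rabs_right in Hhd by lra.
        assert (Y <= / h).
        { apply Rinv_lt_contravar in Hhd. rewrite Rinv_inv in Hhd. lra. apply Rmult_lt_0_compat; auto. }
        specialize (KY (/ h) H). simpl in KY.
        replace ((peval (pj j) (/ h) * exp (- / h) - 0) / h - 0) with (/ h * 1 * peval (pj j) (/ h) * exp (- / h)) by (field; lra).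
        auto.
      * replace ((0 - 0) / h - 0) with 0 by (field; auto). rewrite Rabs_R0; auto.
Qed.

Lemma affine_deriv al be x : derivable_pt_lim (fun x => al * x + be) x al.
Proof. apply is_derive_Reals. auto_derive; auto. ring. Qed.

Lemma tower_affine D al be : tower D -> tower (fun j x => al ^ j * D j (al * x + be)).
Proof.
  intros HD j x. simpl.
  replace (al * al ^ j * D (S j) (al * x + be)) with (al ^ j * (D (S j) (al * x + be) * al)) by ring.
  change (derivable_pt_lim (mult_real_fct (al ^ j) (comp (D j) (fun x => al * x + be))) x
     (al ^ j * (D (S j) (al * x + be) * al))).
  apply derivable_pt_lim_scal. apply (derivable_pt_lim_comp (fun x => al * x + be) (D j)).
  apply affine_deriv. apply HD.
Qed.

Lemma tower_plus D1 D2 : tower D1 -> tower D2 -> tower (fun j x => D1 j x + D2 j x).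
Proof.
  intros H1 H2 j x. change (derivable_pt_lim (D1 j + D2 j)%F x (D1 (S j) x + D2 (S j) x)).
  apply derivable_pt_lim_plus; auto.
Qed.

Lemma tower_scal D c : tower D -> tower (fun j x => c * D j x).
Proof.
  intros H j x. change (derivable_pt_lim (mult_real_fct c (D j)) x (c * D (S j) x)).
  apply derivable_pt_lim_scal; auto.
Qed.

Fixpoint lsum (D1 D2 : nat -> R -> R) (l : list (nat*nat)) (x : R) : R :=
  match l with nil => 0 | (i,j)::l' => D1 i x * D2 j x + lsum D1 D2 l' x end.
Fixpoint lstep (l : list (nat*nat)) : list (nat*nat) :=
  match l with nil => nil | (i,j)::l' => (S i, j) :: (i, S j) :: lstep l' end.

Lemma lsum_deriv D1 D2 l x : tower D1 -> tower D2 ->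
  derivable_pt_lim (lsum D1 D2 l) x (lsum D1 D2 (lstep l) x).
Proof.
  intros H1 H2. induction l as [|[i j] l IH]; simpl.
  - apply (derivable_pt_lim_const 0 x).
  - change (derivable_pt_lim (D1 i * D2 j + lsum D1 D2 l)%F x
     (D1 (S i) x * D2 j x + (D1 i x * D2 (S j) x + lsum D1 D2 (lstep l) x))).
    replace (D1 (S i) x * D2 j x + (D1 i x * D2 (S j) x + lsum D1 D2 (lstep l) x)) with
      ((D1 (S i) x * D2 j x + D1 i x * D2 (S j) x) + lsum D1 D2 (lstep l) x) by ring.
    apply derivable_pt_lim_plus; auto. apply derivable_pt_lim_mult; auto.
Qed.

Lemma tower_mult D1 D2 : tower D1 -> tower D2 ->
  exists D, tower D /\ D 0%nat = (fun x => D1 0%nat x * D2 0%nat x).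
Proof.
  intros H1 H2. exists (fun j => lsum D1 D2 (Nat.iter j lstep ((0%nat,0%nat)::nil))).
  split.
  - intros j x. simpl. apply lsum_deriv; auto.
  - simpl. apply functional_extensionality; intros; ring.
Qed.

Definition rho (t : R) : R := Ef 0 (1 - t) * Ef 0 (1 + t).

Lemma Ef0_pos x : 0 < x -> 0 < Ef 0 x.
Proof. intros Hx. unfold Ef. destruct (Rlt_dec 0 x); [|lra]. simpl. rewrite Rmult_0_r, Rplus_0_r, Rmult_1_l. apply exp_pos. Qed.
Lemma Ef0_zero x : x <= 0 -> Ef 0 x = 0.
Proof. intros Hx. unfold Ef. destruct (Rlt_dec 0 x); [lra|auto]. Qed.
Lemma Ef0_nonneg x : 0 <= Ef 0 x.
Proof. destruct (Rlt_le_dec 0 x). apply Rlt_le, Ef0_pos; auto. rewrite Ef0_zero; lra. Qed.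

Lemma rho_nonneg t : 0 <= rho t.
Proof. unfold rho. apply Rmult_le_pos; apply Ef0_nonneg. Qed.
Lemma rho_pos t : -1 < t < 1 -> 0 < rho t.
Proof. intros. unfold rho. apply Rmult_lt_0_compat; apply Ef0_pos; lra. Qed.
Lemma rho_out t : t <= -1 \/ 1 <= t -> rho t = 0.
Proof. intros [H|H]; unfold rho. rewrite (Ef0_zero (1 + t)); lra. rewrite (Ef0_zero (1 - t)); lra. Qed.

Lemma rho_tower : exists D, tower D /\ D 0%nat = rho.
Proof.
  destruct (tower_mult _ _ (tower_affine Ef (-1) 1 Ef_tower) (tower_affine Ef 1 1 Ef_tower)) as [D [HD HD0]].
  exists D; split; auto. rewrite HD0. apply functional_extensionality; intros x. unfold rho. simpl.
  replace (-1 * x + 1) with (1 - x) by ring. replace (1 * x + 1) with (1 + x) by ring. ring.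
Qed.

Definition Drho : nat -> R -> R := proj1_sig (constructive_indefinite_description _ rho_tower).
Lemma Drho_tower : tower Drho.
Proof. unfold Drho. destruct (constructive_indefinite_description _ rho_tower) as [D [H1 H2]]; auto. Qed.
Lemma Drho0 : Drho 0%nat = rho.
Proof. unfold Drho. destruct (constructive_indefinite_description _ rho_tower) as [D [H1 H2]]; auto. Qed.

Lemma tower_cont D j x : tower D -> continuous (D j) x.
Proof.
  intros HD. apply continuity_pt_filterlim. apply (derivable_continuous_pt _ _ (exist _ (D (S j) x) (HD j x))).
Qed.

Lemma rho_cont x : continuous rho x.
Proof. rewrite <- Drho0. apply tower_cont, Drho_tower. Qed.

Lemma rho_deriv x : derivable_pt_lim rho x (Drho 1%nat x).
Proof. rewrite <- Drho0. apply Drho_tower. Qed.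

Lemma prim_deriv f a : (forall x, continuous f x) ->
  forall x, derivable_pt_lim (fun y => RInt f a y) x (f x).
Proof.
  intros Hf x. apply is_derive_Reals. apply (is_derive_RInt f (fun y => RInt f a y) a x); auto.
  apply filter_forall. intros b. apply RInt_correct. apply ex_RInt_continuous. intros; apply Hf.
Qed.

Definition Prim1 (t : R) : R := RInt rho (-1) t.
Definition Prim2 (t : R) : R := RInt Prim1 (-1) t.

Lemma Prim1_deriv x : derivable_pt_lim Prim1 x (rho x).
Proof. apply prim_deriv, rho_cont. Qed.
Lemma Prim1_cont x : continuous Prim1 x.
Proof. apply continuity_pt_filterlim. apply (derivable_continuous_pt _ _ (exist _ (rho x) (Prim1_deriv x))). Qed.
Lemma Prim2_deriv x : derivable_pt_lim Prim2 x (Prim1 x).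
Proof. apply prim_deriv, Prim1_cont. Qed.

Definition crho := Prim1 1.
Lemma crho_pos : 0 < crho.
Proof.
  unfold crho, Prim1. apply RInt_gt_0. lra. intros; apply rho_pos; lra. intros; apply rho_cont.
Qed.

Lemma const_on f f' a b : a <= b -> (forall c, a <= c <= b -> derivable_pt_lim f c (f' c)) ->
  (forall c, a < c < b -> f' c = 0) -> f b = f a.
Proof.
  intros Hab Hf Hz. destruct (Req_dec a b) as [<-|Hne]; auto.
  destruct (MVT_cor2 f f' a b ltac:(lra) Hf) as [c [Hc1 Hc2]]. rewrite Hz in Hc1; auto. lra.
Qed.

Lemma Prim1_left t : t <= -1 -> Prim1 t = 0.
Proof.
  intros Ht. transitivity (Prim1 (-1)).
  symmetry. apply (const_on Prim1 rho t (-1)); auto. intros; apply Prim1_deriv.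
  intros; apply rho_out; lra.
  unfold Prim1. rewrite RInt_point. reflexivity.
Qed.

Lemma Prim1_right t : 1 <= t -> Prim1 t = crho.
Proof.
  intros Ht. unfold crho. apply (const_on Prim1 rho 1 t); auto. intros; apply Prim1_deriv.
  intros; apply rho_out; lra.
Qed.

Lemma Prim2_left t : t <= -1 -> Prim2 t = 0.
Proof.
  intros Ht. transitivity (Prim2 (-1)).
  symmetry. apply (const_on Prim2 Prim1 t (-1)); auto. intros; apply Prim2_deriv.
  intros; apply Prim1_left; lra.
  unfold Prim2. rewrite RInt_point. reflexivity.
Qed.

Lemma Prim2_right t : 1 <= t -> Prim2 t = Prim2 1 + crho * (t - 1).
Proof.
  intros Ht. pose (g := fun y => Prim2 y - crho * y).
  assert (g t = g 1).
  { apply (const_on g (fun y => Prim1 y - crho * 1) 1 t); auto.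
    intros c Hc. unfold g. apply derivable_pt_lim_minus. apply Prim2_deriv.
    change (derivable_pt_lim (mult_real_fct crho id) c (crho * 1)). apply derivable_pt_lim_scal, derivable_pt_lim_id.
    intros c Hc. rewrite Prim1_right; lra. }
  unfold g in H. lra.
Qed.

Definition TP (j : nat) : R -> R :=
  match j with O => Prim2 | S O => Prim1 | S (S j') => Drho j' end.

Lemma TP_tower : tower TP.
Proof.
  intros [|[|j]] x; simpl. apply Prim2_deriv. rewrite Drho0. apply Prim1_deriv. apply Drho_tower.
Qed.

Definition clamp (t : R) := Rmax (-1) (Rmin 1 t).
Lemma clamp_in t : -1 <= clamp t <= 1.
Proof. unfold clamp, Rmax, Rmin. destruct (Rle_dec 1 t); destruct (Rle_dec (-1) _); lra. Qed.
Lemma clamp_lip a b : Rabs (clamp a - clamp b) <= Rabs (a - b).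
Proof.
  unfold clamp, Rmax, Rmin. destruct (Rle_dec 1 a); destruct (Rle_dec 1 b);
  repeat match goal with |- context [Rle_dec ?x ?y] => destruct (Rle_dec x y) end;
  apply Rabs_le; split; try (pose proof (Rle_abs (a - b)); pose proof (Rle_abs (-(a-b))); rewrite Rabs_Ropp in *; lra).
Qed.
Lemma rho_clamp t : rho t = rho (clamp t).
Proof.
  unfold clamp, Rmax, Rmin. destruct (Rle_dec 1 t).
  - destruct (Rle_dec (-1) 1); [|lra]. rewrite !rho_out; lra.
  - destruct (Rle_dec (-1) t); auto. rewrite !rho_out; lra.
Qed.

Lemma rho_lip : exists Lr, 0 <= Lr /\ forall a b, Rabs (rho a - rho b) <= Lr * Rabs (a - b).
Proof.
  destruct (continuity_ab_maj (fun t => Rabs (Drho 1%nat t)) (-1) 1 ltac:(lra)) as [m [Hm1 Hm2]].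
  { intros c Hc. apply (continuity_pt_comp (Drho 1%nat) Rabs).
    apply continuity_pt_filterlim. apply tower_cont, Drho_tower. apply Rcontinuity_abs. }
  exists (Rabs (Drho 1%nat m)). split. apply Rabs_pos.
  intros a b. rewrite (rho_clamp a), (rho_clamp b).
  pose proof (clamp_in a). pose proof (clamp_in b).
  destruct (MVT_abs rho (Drho 1%nat) (clamp b) (clamp a)) as [c [Hc1 Hc2]].
  intros; apply rho_deriv.
  rewrite Hc1. apply Rle_trans with (Rabs (Drho 1%nat m) * Rabs (clamp a - clamp b)).
  apply Rmult_le_compat_r. apply Rabs_pos. apply Hm1.
  split. eapply Rle_trans; [|apply Hc2]. apply Rmin_glb; lra. eapply Rle_trans; [apply Hc2|]. apply Rmax_lub; lra.
  apply Rmult_le_compat_l. apply Rabs_pos. apply clamp_lip.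
Qed.

Lemma rho_bnd : exists Rb, 0 <= Rb /\ forall a, rho a <= Rb.
Proof.
  destruct (continuity_ab_maj rho (-1) 1 ltac:(lra)) as [m [Hm1 Hm2]].
  { intros c Hc. apply continuity_pt_filterlim. apply rho_cont. }
  exists (rho m). split. apply rho_nonneg. intros a. rewrite rho_clamp. apply Hm1, clamp_in.
Qed.

Ltac destr_le := repeat match goal with
 | |- context [Rle_dec ?x ?y] => destruct (Rle_dec x y)
 | H : context [Rle_dec ?x ?y] |- _ => destruct (Rle_dec x y)
 end.

Definition rj h s t := / h * rho ((t - s) / h).

Lemma comp_aff_deriv F F' h s t : h <> 0 -> derivable_pt_lim F ((t - s) / h) (F' ((t - s) / h)) ->
  derivable_pt_lim (fun t => F ((t - s) / h)) t (/ h * F' ((t - s) / h)).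
Proof.
  intros Hh HF. rewrite Rmult_comm.
  apply (derivable_pt_lim_comp (fun t => (t - s) / h) F); auto.
  apply is_derive_Reals. auto_derive; auto. field; auto.
Qed.

Lemma rj_nonneg h s t : 0 < h -> 0 <= rj h s t.
Proof. intros. unfold rj. apply Rmult_le_pos. apply Rlt_le, Rinv_0_lt_compat; auto. apply rho_nonneg. Qed.

Lemma rj_out h s t : 0 < h -> h <= Rabs (t - s) -> rj h s t = 0.
Proof.
  intros Hh Ht. unfold rj. rewrite rho_out. ring.
  destruct (Rle_lt_dec 0 (t - s)).
  - right. rewrite Rabs_right in Ht by lra. apply Rmult_le_reg_r with h; auto. unfold Rdiv; rewrite Rmult_assoc, Rinv_l; lra.
  - left. rewrite Rabs_left in Ht by lra. apply Rmult_le_reg_r with h; auto. unfold Rdiv; rewrite Rmult_assoc, Rinv_l; lra.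
Qed.

Lemma rj_int h s L : 0 < h -> h <= s -> s + h <= L -> HKint (rj h s) 0 L crho.
Proof.
  intros Hh H1 H2.
  replace crho with (Prim1 ((L - s) / h) - Prim1 ((0 - s) / h)).
  apply (FTC (fun t => Prim1 ((t - s) / h))). lra. intros t _. unfold rj. apply comp_aff_deriv. lra. apply Prim1_deriv.
  rewrite Prim1_right, Prim1_left. ring.
  apply Rmult_le_reg_r with h; auto. unfold Rdiv; rewrite Rmult_assoc, Rinv_l; lra.
  apply Rmult_le_reg_r with h; auto. unfold Rdiv; rewrite Rmult_assoc, Rinv_l; lra.
Qed.

Lemma aff_le h s t : 0 < h -> t - s <= - h -> TP 0 (/ h * t + - s / h) = 0.
Proof.
  intros Hh Ht. simpl. apply Prim2_left.
  apply Rmult_le_reg_r with h; auto. replace ((/ h * t + - s / h) * h) with (t - s) by (field; lra). lra.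
Qed.

Lemma aff_ge h s t : 0 < h -> h <= t - s -> TP 0 (/ h * t + - s / h) = Prim2 1 + crho * (/ h * t + - s / h - 1).
Proof.
  intros Hh Ht. simpl. apply Prim2_right.
  apply Rmult_le_reg_r with h; auto. replace ((/ h * t + - s / h) * h) with (t - s) by (field; lra). lra.
Qed.

Section DBR.
Variables (U : R -> R) (K L : R).
Hypothesis HL : 0 < L.
Hypothesis HK : 0 <= K.
Hypothesis HU : forall s t, 0 <= s <= L -> 0 <= t <= L -> Rabs (U s - U t) <= K * Rabs (s - t).

Lemma U_bound : forall t, 0 <= t <= L -> Rabs (U t) <= Rabs (U 0) + K * L.
Proof.
  intros t Ht. pose proof (HU t 0 Ht ltac:(lra)) as HU'. rewrite Rminus_0_r, (Rabs_right t) in HU' by lra.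
  replace (U t) with (U 0 + (U t - U 0)) by ring. eapply Rle_trans; [apply Rabs_triang|].
  assert (K * t <= K * L) by (apply Rmult_le_compat_l; lra). lra.
Qed.

Lemma Urj_int h s : 0 < h -> exists I, HKint (fun t => U t * rj h s t) 0 L I.
Proof.
  intros Hh. destruct rho_lip as [Lr [HLr HLr']]. destruct rho_bnd as [Rb [HRb HRb']].
  set (UB := Rabs (U 0) + K * L).
  assert (HUB : 0 <= UB) by (unfold UB; pose proof (Rabs_pos (U 0)); nra).
  assert (Hih : 0 < / h) by (apply Rinv_0_lt_compat; auto).
  set (K' := UB * (Lr * / h * / h) + Rb * / h * K).
  assert (HK' : 0 <= K').
  { unfold K'. apply Rplus_le_le_0_compat; repeat apply Rmult_le_pos; lra. }
  apply (osc_integrable _ (fun t => K' * t)). lra.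
  intros; apply Rmult_le_compat_l; lra.
  intros x s0 t y Hx Hxs Hsy Hxt Hty Hy.
  assert (Hr1 : Rabs (rj h s s0 - rj h s t) <= Lr * / h * / h * Rabs (s0 - t)).
  { unfold rj. rewrite <- Rmult_minus_distr_l, Rabs_mult, Rabs_right by lra.
    specialize (HLr' ((s0 - s) / h) ((t - s) / h)).
    replace ((s0 - s) / h - (t - s) / h) with (/ h * (s0 - t)) in HLr' by (field; lra).
    rewrite Rabs_mult, (Rabs_right (/ h)) in HLr' by lra.
    apply Rle_trans with (/ h * (Lr * (/ h * Rabs (s0 - t)))). apply Rmult_le_compat_l; lra.
    right; ring. }
  assert (Hr2 : Rabs (rj h s t) <= Rb * / h).
  { rewrite Rabs_right by (apply Rle_ge, rj_nonneg; auto). unfold rj. rewrite Rmult_comm.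
    apply Rmult_le_compat_r; [lra| apply HRb']. }
  assert (Hu1 := U_bound s0 ltac:(lra)). fold UB in Hu1.
  assert (Hu2 := HU s0 t ltac:(lra) ltac:(lra)).
  assert (Hst : Rabs (s0 - t) <= y - x) by (apply Rabs_le; lra).
  replace (U s0 * rj h s s0 - U t * rj h s t) with (U s0 * (rj h s s0 - rj h s t) + rj h s t * (U s0 - U t)) by ring.
  eapply Rle_trans; [apply Rabs_triang|]. rewrite !Rabs_mult.
  apply Rle_trans with (K' * Rabs (s0 - t)).
  - unfold K'. rewrite Rmult_plus_distr_r.
    apply Rplus_le_compat.
    + rewrite Rmult_assoc. apply Rmult_le_compat; try apply Rabs_pos; auto.
    + replace (Rb * / h * K * Rabs (s0 - t)) with ((Rb * / h) * (K * Rabs (s0 - t))) by ring.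
      apply Rmult_le_compat; try apply Rabs_pos; auto.
  - replace (K' * y - K' * x) with (K' * (y - x)) by ring. apply Rmult_le_compat_l; auto.
Qed.

Lemma Urj_est h s I : 0 < h -> h <= s -> s + h <= L ->
  HKint (fun t => U t * rj h s t) 0 L I -> Rabs (I - U s * crho) <= K * h * crho.
Proof.
  intros Hh H1 H2 HI.
  assert (HD : HKint (fun t => U t * rj h s t - U s * rj h s t) 0 L (I - U s * crho)).
  { apply HKint_minus; auto. apply HKint_scal. apply rj_int; auto. }
  assert (HB : HKint (fun t => K * h * rj h s t) 0 L (K * h * crho)).
  { apply HKint_scal. apply rj_int; auto. }
  assert (HBm : HKint (fun t => - (K * h) * rj h s t) 0 L (- (K * h) * crho)).
  { apply HKint_scal. apply rj_int; auto. }
  assert (Hpt : forall t, 0 <= t <= L -> Rabs (U t * rj h s t - U s * rj h s t) <= K * h * rj h s t).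
  { intros t Ht. destruct (Rlt_le_dec (Rabs (t - s)) h) as [Hts|Hts].
    - replace (U t * rj h s t - U s * rj h s t) with ((U t - U s) * rj h s t) by ring.
      rewrite Rabs_mult, (Rabs_right (rj h s t)) by (apply Rle_ge, rj_nonneg; auto).
      apply Rmult_le_compat_r. apply rj_nonneg; auto.
      specialize (HU t s Ht ltac:(lra)). apply Rle_trans with (K * Rabs (t - s)); auto.
      apply Rmult_le_compat_l; lra.
    - rewrite rj_out; auto. replace (U t * 0 - U s * 0) with 0 by ring. rewrite Rabs_R0; lra. }
  apply Rabs_le. split.
  - replace (- (K * h * crho)) with (- (K * h) * crho) by ring.
    apply (HKint_le (fun t => - (K * h) * rj h s t) (fun t => U t * rj h s t - U s * rj h s t) 0 L); auto; [lra|].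
    intros t Ht. specialize (Hpt t Ht). apply Rabs_def2b in Hpt || (pose proof (Rle_abs (-(U t * rj h s t - U s * rj h s t))); rewrite Rabs_Ropp in H; lra).
  - apply (HKint_le (fun t => U t * rj h s t - U s * rj h s t) (fun t => K * h * rj h s t) 0 L); auto; [lra|].
    intros t Ht. specialize (Hpt t Ht). pose proof (Rle_abs (U t * rj h s t - U s * rj h s t)). lra.
Qed.

Hypothesis HDBR : forall D, tower D ->
  (exists a b, 0 < a /\ a <= b /\ b < L /\ forall t, t < a \/ b < t -> D 0%nat t = 0) ->
  HKint (fun t => U t * D 2%nat t) 0 L 0.

Lemma three_point s1 s2 s3 : 0 < s1 < L -> 0 < s2 < L -> 0 < s3 < L ->
  (s2 - s3) * U s1 + (s3 - s1) * U s2 + (s1 - s2) * U s3 = 0.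
Proof.
  intros Hs1 Hs2 Hs3.
  set (a1 := s2 - s3). set (a2 := s3 - s1). set (a3 := s1 - s2).
  set (S := a1 * U s1 + a2 * U s2 + a3 * U s3).
  set (C := (Rabs a1 + Rabs a2 + Rabs a3) * K).
  assert (HC : 0 <= C) by (unfold C; pose proof (Rabs_pos a1); pose proof (Rabs_pos a2); pose proof (Rabs_pos a3); nra).
  set (hmax := Rmin (Rmin (Rmin s1 (L - s1)) (Rmin s2 (L - s2))) (Rmin s3 (L - s3)) / 2).
  assert (Hhm1 : hmax <= s1 / 2 /\ hmax <= (L - s1) / 2 /\ hmax <= s2 / 2 /\ hmax <= (L - s2) / 2 /\ hmax <= s3 / 2 /\ hmax <= (L - s3) / 2).
  { unfold hmax, Rmin. destr_le; repeat split; lra. }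
  assert (Hhm0 : 0 < hmax).
  { unfold hmax, Rmin. destr_le; lra. }
  assert (Hmain : forall h, 0 < h -> h <= hmax -> Rabs S <= C * h).
  { intros h Hh Hhm.
    destruct (Urj_int h s1 Hh) as [I1 HI1]. destruct (Urj_int h s2 Hh) as [I2 HI2]. destruct (Urj_int h s3 Hh) as [I3 HI3].
    pose proof (Urj_est h s1 I1 Hh ltac:(lra) ltac:(lra) HI1) as E1.
    pose proof (Urj_est h s2 I2 Hh ltac:(lra) ltac:(lra) HI2) as E2.
    pose proof (Urj_est h s3 I3 Hh ltac:(lra) ltac:(lra) HI3) as E3.
    assert (Hih : 0 < / h) by (apply Rinv_0_lt_compat; auto).
    pose proof (tower_scal _ (a1 * h) (tower_affine TP (/ h) (- s1 / h) TP_tower)) as T1.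
    pose proof (tower_scal _ (a2 * h) (tower_affine TP (/ h) (- s2 / h) TP_tower)) as T2.
    pose proof (tower_scal _ (a3 * h) (tower_affine TP (/ h) (- s3 / h) TP_tower)) as T3.
    pose proof (tower_plus _ _ (tower_plus _ _ T1 T2) T3) as T. simpl in T.
    specialize (HDBR _ T).
    set (m := Rmin s1 (Rmin s2 s3)). set (M := Rmax s1 (Rmax s2 s3)).
    assert (Hm : m <= s1 /\ m <= s2 /\ m <= s3 /\ (m = s1 \/ m = s2 \/ m = s3)).
    { unfold m, Rmin. destr_le; repeat split; try lra; tauto. }
    assert (HM : s1 <= M /\ s2 <= M /\ s3 <= M /\ (M = s1 \/ M = s2 \/ M = s3)).
    { unfold M, Rmax. destr_le; repeat split; lra. }
    assert (HD2 : HKint (fun t => U t * ((a1 * h * ((/ h) ^ 2 * TP 2 (/ h * t + - s1 / h)) +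
                   a2 * h * ((/ h) ^ 2 * TP 2 (/ h * t + - s2 / h))) +
                   a3 * h * ((/ h) ^ 2 * TP 2 (/ h * t + - s3 / h)))) 0 L 0).
    { apply HDBR. exists (m - h), (M + h). split; [|split; [|split]].
      - destruct Hm as (_&_&_&[E|[E|E]]); rewrite E; lra.
      - destruct Hm as (?&?&?&_); destruct HM as (?&?&?&_); lra.
      - destruct HM as (_&_&_&[E|[E|E]]); rewrite E; lra.
      - intros t [Ht|Ht].
        + destruct Hm as (?&?&?&_). cbv beta.
          rewrite (aff_le h s1 t), (aff_le h s2 t), (aff_le h s3 t); try lra.
        + destruct HM as (?&?&?&_). cbv beta.
          rewrite (aff_ge h s1 t), (aff_ge h s2 t), (aff_ge h s3 t); try lra.
          replace (a1 * h * ((/ h) ^ 0 * (Prim2 1 + crho * (/ h * t + - s1 / h - 1))) +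
            a2 * h * ((/ h) ^ 0 * (Prim2 1 + crho * (/ h * t + - s2 / h - 1))) +
            a3 * h * ((/ h) ^ 0 * (Prim2 1 + crho * (/ h * t + - s3 / h - 1)))) with
            ((a1 + a2 + a3) * h * (Prim2 1 - crho) + crho * (a1 * (t - s1) + a2 * (t - s2) + a3 * (t - s3))) by (simpl; field; lra).
          unfold a1, a2, a3. ring. }
    assert (HS : HKint (fun t => a1 * (U t * rj h s1 t) + a2 * (U t * rj h s2 t) + a3 * (U t * rj h s3 t)) 0 L
                   (a1 * I1 + a2 * I2 + a3 * I3)).
    { apply HKint_plus. apply HKint_plus. all: apply HKint_scal; auto. }
    assert (Hsum : a1 * I1 + a2 * I2 + a3 * I3 = 0).
    { apply (HKint_unique (fun t => a1 * (U t * rj h s1 t) + a2 * (U t * rj h s2 t) + a3 * (U t * rj h s3 t)) 0 L); [lra|apply HS|]. eapply HKint_ext; [|apply HD2].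
      intros t _. simpl. rewrite Drho0. unfold rj.
      replace ((t - s1) / h) with (/ h * t + - s1 / h) by (field; lra).
      replace ((t - s2) / h) with (/ h * t + - s2 / h) by (field; lra).
      replace ((t - s3) / h) with (/ h * t + - s3 / h) by (field; lra).
      field. lra. }
    assert (Rabs S * crho <= C * h * crho).
    { replace (Rabs S * crho) with (Rabs (S * crho)) by (rewrite Rabs_mult, (Rabs_right crho); auto; apply Rle_ge, Rlt_le, crho_pos).
      replace (S * crho) with (- (a1 * (I1 - U s1 * crho) + a2 * (I2 - U s2 * crho) + a3 * (I3 - U s3 * crho))) by (unfold S; lra).
      rewrite Rabs_Ropp.
      eapply Rle_trans; [apply Rabs_triang|]. eapply Rle_trans; [apply Rplus_le_compat_r; apply Rabs_triang|].
      rewrite !Rabs_mult.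
      pose proof (Rabs_pos a1). pose proof (Rabs_pos a2). pose proof (Rabs_pos a3).
      apply Rmult_le_compat_l with (r := Rabs a1) in E1; auto.
      apply Rmult_le_compat_l with (r := Rabs a2) in E2; auto.
      apply Rmult_le_compat_l with (r := Rabs a3) in E3; auto.
      unfold C. lra. }
    pose proof crho_pos.
    apply Rmult_le_reg_r with crho; auto. }
  assert (Rabs S <= 0).
  { apply le_eps. intros eta Heta.
    set (h := Rmin hmax (eta / (C + 1))).
    assert (Hh : 0 < h) by (unfold h; apply Rmin_glb_lt; auto; apply Rdiv_lt_0_compat; lra).
    specialize (Hmain h Hh (Rmin_l _ _)).
    assert (C * h <= eta).
    { apply Rle_trans with (C * (eta / (C + 1))). apply Rmult_le_compat_l; auto. apply Rmin_r.
      replace (C * (eta / (C + 1))) with (eta * (C / (C + 1))) by (field; lra).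
      assert (C / (C + 1) <= 1). { apply Rmult_le_reg_r with (C + 1); [lra|]. unfold Rdiv; rewrite Rmult_assoc, Rinv_l; lra. }
      nra. }
    lra. }
  pose proof (Rabs_pos S). assert (Rabs S = 0) by lra.
  apply Rabs_eq_0 in H1. auto.
Qed.

Lemma DBR_affine : exists A B, forall t, 0 <= t <= L -> U t = A + B * t.
Proof.
  set (p := L / 3). set (q := 2 * L / 3).
  set (B := (U q - U p) / (q - p)). set (A := U p - B * p).
  assert (Hint : forall s, 0 < s < L -> U s = A + B * s).
  { intros s Hs. pose proof (three_point p s q ltac:(unfold p; lra) Hs ltac:(unfold q; lra)).
    assert (Hqp : q - p <> 0) by (unfold p, q; lra).
    apply Rmult_eq_reg_r with (q - p); auto. unfold A, B.
    replace ((U p - (U q - U p) / (q - p) * p + (U q - U p) / (q - p) * s) * (q - p)) with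
      (U p * (q - p) + (U q - U p) * (s - p)) by (field; auto).
    apply Rminus_diag_uniq. rewrite <- H. ring. }
  exists A, B. intros t Ht.
  destruct (Rlt_le_dec 0 t) as [H0|H0]; [destruct (Rlt_le_dec t L) as [H1|H1]|].
  - apply Hint; lra.
  - assert (t = L) by lra. subst t.
    assert (Rabs (U L - (A + B * L)) <= 0).
    { apply le_eps. intros eta Heta.
      set (s := L - Rmin (L / 2) (eta / (K + Rabs B + 1))).
      assert (Hm1 : Rmin (L / 2) (eta / (K + Rabs B + 1)) <= L / 2) by apply Rmin_l.
      assert (Hm2 : Rmin (L / 2) (eta / (K + Rabs B + 1)) <= eta / (K + Rabs B + 1)) by apply Rmin_r.
      assert (Hm3 : 0 < Rmin (L / 2) (eta / (K + Rabs B + 1))).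
      { apply Rmin_glb_lt; [lra|]. apply Rdiv_lt_0_compat; [lra|]. pose proof (Rabs_pos B); lra. }
      assert (Hs : 0 < s < L) by (unfold s; lra).
      pose proof (Hint s Hs) as E1. pose proof (HU L s ltac:(lra) ltac:(lra)) as E2.
      replace (U L - (A + B * L)) with ((U L - U s) + B * (s - L)) by (rewrite E1; ring).
      eapply Rle_trans; [apply Rabs_triang|]. rewrite Rabs_mult.
      set (d := Rmin (L / 2) (eta / (K + Rabs B + 1))) in *.
      replace (L - s) with d in * by (unfold s; ring). replace (s - L) with (- d) by (unfold s; ring).
      rewrite Rabs_Ropp, (Rabs_right d) in * by lra.
      assert ((K + Rabs B) * d <= eta).
      { apply Rle_trans with ((K + Rabs B + 1) * d). pose proof (Rabs_pos B). nra.
        apply Rmult_le_compat_l with (r := K + Rabs B + 1) in Hm2; [|pose proof (Rabs_pos B); lra].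
        replace ((K + Rabs B + 1) * (eta / (K + Rabs B + 1))) with eta in Hm2 by (field; pose proof (Rabs_pos B); lra).
        lra. }
      lra. }
    pose proof (Rabs_pos (U L - (A + B * L))). assert (HZ : Rabs (U L - (A + B * L)) = 0) by lra.
    apply Rabs_eq_0 in HZ. lra.
  - assert (t = 0) by lra. subst t.
    assert (Rabs (U 0 - (A + B * 0)) <= 0).
    { apply le_eps. intros eta Heta.
      set (s := Rmin (L / 2) (eta / (K + Rabs B + 1))).
      assert (Hm1 : s <= L / 2) by apply Rmin_l.
      assert (Hm2 : s <= eta / (K + Rabs B + 1)) by apply Rmin_r.
      assert (Hm3 : 0 < s).
      { apply Rmin_glb_lt; [lra|]. apply Rdiv_lt_0_compat; [lra|]. pose proof (Rabs_pos B); lra. }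
      assert (Hs : 0 < s < L) by lra.
      pose proof (Hint s Hs) as E1. pose proof (HU 0 s ltac:(lra) ltac:(lra)) as E2.
      replace (U 0 - (A + B * 0)) with ((U 0 - U s) + B * s) by (rewrite E1; ring).
      eapply Rle_trans; [apply Rabs_triang|]. rewrite Rabs_mult.
      replace (0 - s) with (- s) in E2 by ring.
      rewrite Rabs_Ropp, (Rabs_right s) in * by lra.
      assert ((K + Rabs B) * s <= eta).
      { apply Rle_trans with ((K + Rabs B + 1) * s). pose proof (Rabs_pos B). nra.
        apply Rmult_le_compat_l with (r := K + Rabs B + 1) in Hm2; [|pose proof (Rabs_pos B); lra].
        replace ((K + Rabs B + 1) * (eta / (K + Rabs B + 1))) with eta in Hm2 by (field; pose proof (Rabs_pos B); lra).
        lra. }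
      lra. }
    pose proof (Rabs_pos (U 0 - (A + B * 0))). assert (HZ : Rabs (U 0 - (A + B * 0)) = 0) by lra.
    apply Rabs_eq_0 in HZ. lra.
Qed.

End DBR.

Lemma W1_sub L g g' : W1inf L g g' -> forall x y, 0 <= x -> x <= y -> y <= L -> HKint g' x y (g y - g x).
Proof.
  intros [_ H] x y H1 H2 H3. replace (g y - g x) with ((g y - g 0) - (g x - g 0)) by ring.
  apply HKint_restr with 0; auto. apply H; lra. apply H; lra.
Qed.

Lemma W1_bound L g g' : W1inf L g g' -> exists M, 0 <= M /\ forall t, 0 <= t <= L -> Rabs (g' t) <= M.
Proof.
  intros [[M HM] _]. exists (Rmax M 0). split. apply Rmax_r.
  intros t Ht. eapply Rle_trans; [apply HM; auto| apply Rmax_l].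
Qed.

Lemma W1_lip L g g' : W1inf L g g' -> exists K, 0 <= K /\
  forall s t, 0 <= s <= L -> 0 <= t <= L -> Rabs (g s - g t) <= K * Rabs (s - t).
Proof.
  intros HW. destruct (W1_bound L g g' HW) as [M [HM0 HM]]. exists M; split; auto.
  intros s t Hs Ht. destruct (Rle_lt_dec s t).
  - pose proof (HKint_bound g' s t _ M r ltac:(intros; apply HM; lra) (W1_sub L g g' HW s t ltac:(lra) r ltac:(lra))).
    rewrite <- Rabs_Ropp. replace (- (g s - g t)) with (g t - g s) by ring.
    rewrite <- Rabs_Ropp with (x := s - t). replace (- (s - t)) with (t - s) by ring. rewrite (Rabs_right (t - s)) by lra. auto.
  - pose proof (HKint_bound g' t s _ M ltac:(lra) ltac:(intros; apply HM; lra) (W1_sub L g g' HW t s ltac:(lra) ltac:(lra) ltac:(lra))).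
    rewrite (Rabs_right (s - t)) by lra. auto.
Qed.

Lemma deriv_zero_local f f' x a b : (forall t, derivable_pt_lim f t (f' t)) ->
  (forall t, t < a \/ b < t -> f t = 0) -> x < a \/ b < x -> f' x = 0.
Proof.
  intros Hf Hz Hx.
  assert (Hd : exists d, 0 < d /\ forall y, Rabs (y - x) < d -> fct_cte 0 y = f y).
  { destruct Hx as [Hx|Hx].
    - exists (a - x). split; [lra|]. intros y Hy. unfold fct_cte. symmetry; apply Hz. apply Rabs_def2 in Hy. lra.
    - exists (x - b). split; [lra|]. intros y Hy. unfold fct_cte. symmetry; apply Hz. apply Rabs_def2 in Hy. lra. }
  destruct Hd as [d [Hd1 Hd2]].
  pose proof (dpl_local (fct_cte 0) f x 0 d Hd1 Hd2 (derivable_pt_lim_const 0 x)).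
  symmetry. apply (uniqueness_limite f x); auto.
Qed.

Lemma tower_supp D a b : tower D -> (forall t, t < a \/ b < t -> D 0%nat t = 0) ->
  forall j t, t < a \/ b < t -> D j t = 0.
Proof.
  intros HD H0 j. induction j as [|j IH]; intros t Ht; auto.
  apply (deriv_zero_local (D j) (D (S j)) t a b); auto.
Qed.

Definition supp_in (L : R) (D : nat -> R -> R) :=
  exists a b, 0 < a /\ a <= b /\ b < L /\ forall t, t < a \/ b < t -> D 0%nat t = 0.

Lemma test_fun_of_tower L D j : tower D -> supp_in L D ->
  test_fun L (D j) (D (S j)).
Proof.
  intros HD [a [b (H1 & H2 & H3 & H4)]]. split.
  - exists (fun m => D (j + m)%nat). split; [f_equal; lia|]. split; [f_equal; lia|].
    intros m x. rewrite Nat.add_succ_r. apply (HD (j + m)%nat x).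
  - exists a, b. repeat split; auto. intros; apply (tower_supp D a b HD H4); auto.
Qed.

Lemma tower_of_test_fun L phi phi' : test_fun L phi phi' ->
  exists D, tower D /\ supp_in L D /\ D 0%nat = phi /\ D 1%nat = phi'.
Proof.
  intros [[D (HD0 & HD1 & HD)] [a [b (H1 & H2 & H3 & H4)]]].
  exists D. split; auto. split; auto. exists a, b. repeat split; auto. intros; rewrite HD0; auto.
Qed.

Lemma supp_ends L D j : tower D -> supp_in L D -> D j 0 = 0 /\ D j L = 0.
Proof.
  intros HD [a [b (H1 & H2 & H3 & H4)]]. split; apply (tower_supp D a b HD H4); lra.
Qed.

Lemma tower_bound L D j : 0 <= L -> tower D -> exists M, 0 <= M /\ forall t, 0 <= t <= L -> Rabs (D j t) <= M.
Proof.
  intros HL HD. apply (deriv_cont_bound (D j) (D (S j)) 0 L HL). intros; apply HD.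
Qed.

Lemma finite_bound (n : nat) (L : R) (g : nat -> R -> R) :
  (forall i, (i < n)%nat -> exists M, forall t, 0 <= t <= L -> Rabs (g i t) <= M) ->
  exists M, 0 <= M /\ forall i t, (i < n)%nat -> 0 <= t <= L -> Rabs (g i t) <= M.
Proof.
  induction n as [|n IH]; intros H.
  - exists 0. split; [lra|]. intros; lia.
  - destruct IH as [M1 [HM1 HM1']]. intros i Hi; apply H; lia.
    destruct (H n ltac:(lia)) as [M2 HM2].
    exists (Rmax M1 M2). split. eapply Rle_trans; [apply HM1|apply Rmax_l].
    intros i t Hi Ht. destruct (Nat.eq_dec i n) as [->|Hin].
    + eapply Rle_trans; [apply HM2; auto|apply Rmax_r].
    + eapply Rle_trans; [apply HM1'; auto; lia|apply Rmax_l].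
Qed.

Lemma null_sumabs (n : nat) (e : nat -> R -> R) a b :
  (forall i, (i < n)%nat -> null_on (e i) a b) -> null_on (fun t => sumabs n (fun i => e i t)) a b.
Proof.
  induction n as [|n IH]; intros H.
  - intros eps He. exists (fun _ => 1). split; [intros; lra|]. intros P HP. simpl.
    replace (asum (fun _ : R => 0) a P) with 0. lra.
    clear HP H. revert a. induction P as [|[t x] P IHP]; simpl; intros; auto. rewrite Rabs_R0, <- IHP; ring.
  - simpl. apply (null_le (fun t => Rabs (sumabs n (fun i => e i t)) + Rabs (e n t)) _ 1).
    lra. apply null_add. apply IH; intros; apply H; lia. apply H; lia.
    intros t _. pose proof (sumabs_nonneg n (fun i => e i t)). pose proof (Rabs_pos (e n t)).
    rewrite (Rabs_right (sumabs n (fun i => e i t) + Rabs (e n t))) by lra.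
    rewrite (Rabs_right (sumabs n (fun i => e i t))) by lra.
    rewrite (Rabs_right (sumabs n (fun i => e i t) + Rabs (e n t))) by lra. lra.
Qed.

Lemma choice_nat {X : Type} (x0 : X) (n : nat) (P : nat -> X -> Prop) :
  (forall i, (i < n)%nat -> exists x, P i x) -> exists F : nat -> X, forall i, (i < n)%nat -> P i (F i).
Proof.
  intros H.
  assert (H' : forall i, exists x, (i < n)%nat -> P i x).
  { intros i. destruct (lt_dec i n) as [Hi|Hi]. destruct (H i Hi) as [x Hx]. exists x; auto. exists x0; intros; lia. }
  exists (fun i => proj1_sig (constructive_indefinite_description _ (H' i))).
  intros i Hi. destruct (constructive_indefinite_description _ (H' i)); simpl; auto.
Qed.

Lemma bump_tower L : 0 < L -> tower (fun j t => (4 / L) ^ j * Drho j (4 / L * t + -2)) /\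
  supp_in L (fun j t => (4 / L) ^ j * Drho j (4 / L * t + -2)).
Proof.
  intros HL. split. apply tower_affine, Drho_tower.
  exists (L / 4), (3 * L / 4). repeat split; try lra.
  intros t Ht. simpl. rewrite Drho0. rewrite rho_out. ring.
  destruct Ht as [Ht|Ht]; [left|right].
  - apply Rmult_lt_compat_l with (r := 4 / L) in Ht; [|apply Rdiv_lt_0_compat; lra].
    replace (4 / L * (L / 4)) with 1 in Ht by (field; lra). lra.
  - apply Rmult_lt_compat_l with (r := 4 / L) in Ht; [|apply Rdiv_lt_0_compat; lra].
    replace (4 / L * (3 * L / 4)) with 3 in Ht by (field; lra). lra.
Qed.

Lemma bump_int L : 0 < L -> HKint (fun t => (4 / L) ^ 0 * Drho 0 (4 / L * t + -2)) 0 L (L / 4 * crho).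
Proof.
  intros HL.
  replace (L / 4 * crho) with (L / 4 * Prim1 (4 / L * L + -2) - L / 4 * Prim1 (4 / L * 0 + -2)).
  - apply (FTC (fun t => L / 4 * Prim1 (4 / L * t + -2))). lra.
    intros t _. simpl. rewrite Drho0.
    replace (1 * rho (4 / L * t + -2)) with (L / 4 * (rho (4 / L * t + -2) * (4 / L))) by (field; lra).
    change (derivable_pt_lim (mult_real_fct (L / 4) (comp Prim1 (fun t => 4 / L * t + -2))) t
      (L / 4 * (rho (4 / L * t + -2) * (4 / L)))).
    apply derivable_pt_lim_scal. apply derivable_pt_lim_comp. apply affine_deriv. apply Prim1_deriv.
  - rewrite Prim1_right, Prim1_left. ring.
    replace (4 / L * 0 + -2) with (-2) by ring. lra.
    replace (4 / L * L + -2) with 2 by (field; lra). lra.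
Qed.

Lemma f_const n L k beta tau tau' f f' lam :
  0 < L -> W1inf L f f' -> (exists t, 0 <= t <= L /\ f t <> 0) -> eqn n lam (fun _ => 0) ->
  weak_eqs n L k beta tau tau' f f' lam ->
  exists A, A <> 0 /\ forall t, 0 <= t <= L -> f t = A.
Proof.
  intros HL HW [t0 [Ht0 Hft0]] Hlam [_ H2].
  assert (HfD : forall D, tower D -> supp_in L D -> HKint (fun t => f t * D 2%nat t) 0 L 0).
  { intros D HD HS. pose proof (H2 (D 1%nat) (D 2%nat) (test_fun_of_tower L D 1 HD HS)) as H.
    eapply HKint_ext; [|apply H]. intros t _. cbv beta. rewrite (dot_zero_l n lam) by auto. ring. }
  destruct (W1_lip L f f' HW) as [K [HK0 HK]].
  destruct (DBR_affine f K L HL HK0 HK HfD) as [A [B HAB]].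
  destruct (bump_tower L HL) as [T S].
  set (D := fun j t => (4 / L) ^ j * Drho j (4 / L * t + -2)) in *.
  assert (H1 : HKint (fun t => (B * t + A) * D 1%nat t) 0 L 0).
  { pose proof (H2 (D 0%nat) (D 1%nat) (test_fun_of_tower L D 0 T S)) as H.
    eapply HKint_ext; [|apply H]. intros t Ht. cbv beta. rewrite (dot_zero_l n lam) by auto. rewrite HAB by auto. ring. }
  assert (H3 : HKint (fun t => B * D 0%nat t + (B * t + A) * D 1%nat t) 0 L 0).
  { assert (HF : HKint (fun t => B * D 0%nat t + (B * t + A) * D 1%nat t) 0 L ((B * L + A) * D 0%nat L - (B * 0 + A) * D 0%nat 0)).
    { apply (FTC (fun t => (B * t + A) * D 0%nat t)). lra.
      intros t _. change (derivable_pt_lim (mult_fct (fun t => B * t + A) (D 0%nat)) t (B * D 0%nat t + (B * t + A) * D 1%nat t)).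
      exact (derivable_pt_lim_mult (fun t => B * t + A) (D 0%nat) t B (D 1%nat t) (affine_deriv B A t) (T 0%nat t)). }
    destruct (supp_ends L D 0 T S) as [E0 EL]. rewrite E0, EL in HF.
    replace ((B * L + A) * 0 - (B * 0 + A) * 0) with 0 in HF by ring. auto. }
  assert (H4 : HKint (fun t => B * D 0%nat t) 0 L 0).
  { pose proof (HKint_minus _ _ 0 L 0 0 H3 H1) as HM. rewrite Rminus_0_r in HM.
    eapply HKint_ext; [|apply HM]. intros; cbv beta; ring. }
  assert (H5 : HKint (fun t => B * D 0%nat t) 0 L (B * (L / 4 * crho))).
  { apply HKint_scal. apply bump_int; auto. }
  pose proof (HKint_unique _ 0 L _ _ ltac:(lra) H4 H5).
  pose proof crho_pos.
  assert (B = 0).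
  { destruct (Req_dec B 0); auto. exfalso.
    assert (0 < L / 4 * crho) by (apply Rmult_lt_0_compat; lra).
    assert (B * (L / 4 * crho) <> 0) by (apply Rmult_integral_contrapositive; split; lra). lra. }
  exists A. split.
  - rewrite HAB in Hft0 by auto. rewrite H6 in Hft0. lra.
  - intros t Ht. rewrite HAB by auto. rewrite H6. ring.
Qed.

Definition clampL (L t : R) := Rmax 0 (Rmin L t).
Lemma clampL_in L t : 0 <= L -> 0 <= clampL L t <= L.
Proof. intros. unfold clampL, Rmax, Rmin. destr_le; lra. Qed.
Lemma clampL_id L t : 0 <= t <= L -> clampL L t = t.
Proof. intros. unfold clampL, Rmax, Rmin. destr_le; lra. Qed.
Lemma clampL_lip L s t : 0 <= L -> Rabs (clampL L s - clampL L t) <= Rabs (s - t).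
Proof.
  intros HL. unfold clampL, Rmax, Rmin. destr_le;
  apply Rabs_le; split; try (pose proof (Rle_abs (s - t)); pose proof (Rle_abs (-(s-t))); rewrite Rabs_Ropp in *; lra).
Qed.

Lemma lip_cont g K : 0 <= K -> (forall s t, Rabs (g s - g t) <= K * Rabs (s - t)) -> forall x, continuous g x.
Proof.
  intros HK H x. apply continuity_pt_filterlim. intros e He.
  exists (e / (K + 1)). split. apply Rdiv_lt_0_compat; lra.
  intros y [_ Hy]. simpl in *. unfold R_dist in *. eapply Rle_lt_trans; [apply H|].
  apply Rle_lt_trans with (K * (e / (K + 1))). apply Rmult_le_compat_l; lra.
  replace (K * (e / (K + 1))) with (e * (K / (K + 1))) by (field; lra).
  assert (K / (K + 1) < 1). { apply Rmult_lt_reg_r with (K + 1); [lra|]. unfold Rdiv; rewrite Rmult_assoc, Rinv_l; lra. }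
  nra.
Qed.

Lemma zero_tower_test L : 0 < L -> test_fun L (fun _ => 0) (fun _ => 0).
Proof.
  intros HL. split.
  - exists (fun _ _ => 0). repeat split; auto. intros j x. apply (derivable_pt_lim_const 0 x).
  - exists (L/2), (L/2). repeat split; lra.
Qed.

Lemma unit_test L D i : 0 < L -> tower D -> supp_in L D ->
  forall j, (j < 1 + j)%nat -> test_fun L (fun t => (fun j => if Nat.eqb j i then D 0%nat t else 0) j)
                              (fun t => (fun j => if Nat.eqb j i then D 1%nat t else 0) j).
Proof.
  intros HL HD HS j _. simpl. destruct (Nat.eqb j i).
  - apply test_fun_of_tower; auto.
  - apply zero_tower_test; auto.
Qed.

Lemma lip_of_deriv F F' a b M : (forall t, derivable_pt_lim F t (F' t)) ->
  (forall t, a <= t <= b -> Rabs (F' t) <= M) ->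
  forall s t, a <= s <= b -> a <= t <= b -> Rabs (F s - F t) <= M * Rabs (s - t).
Proof.
  intros HF HM s t Hs Ht.
  destruct (MVT_abs F F' t s) as [c [Hc1 Hc2]]. intros; apply HF.
  rewrite Hc1. apply Rmult_le_compat_r. apply Rabs_pos. apply HM.
  split. eapply Rle_trans; [|apply Hc2]. apply Rmin_glb; lra. eapply Rle_trans; [apply Hc2|]. apply Rmax_lub; lra.
Qed.

Lemma affine_deriv2 A B t : derivable_pt_lim (fun t => A + B * t) t B.
Proof. apply is_derive_Reals. auto_derive; auto. ring. Qed.

Theorem tau_reg n L k beta tau tau' f f' lam A i :
  0 < L -> (forall i, (i < n)%nat -> W1inf L (fun t => tau t i) (fun t => tau' t i)) ->
  W1inf L f f' -> A <> 0 -> (forall t, 0 <= t <= L -> f t = A) ->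
  eqn n lam (fun _ => 0) -> weak_eqs n L k beta tau tau' f f' lam -> (i < n)%nat ->
  exists F v : R -> R, (forall t, derivable_pt_lim F t (v t)) /\
    (forall t, 0 <= t <= L -> derivable_pt_lim v t (- k ^ 2 * F t)) /\
    (forall t, 0 <= t <= L -> F t = tau t i) /\
    (forall t, 0 <= t <= L -> HKint (fun s => tau' s i - v s) 0 t 0).
Proof.
  intros HL Htau Hf HA HfA Hlam [H1 _] Hi.
  set (ti := fun t => tau t i). set (ti' := fun t => tau' t i).
  assert (HW : W1inf L ti ti') by (apply Htau; auto).
  destruct (W1_bound L ti ti' HW) as [Mt' [HMt'0 HMt']].
  destruct (W1_lip L ti ti' HW) as [Kt [HKt0 HKt]].
  assert (Hfnull : null_on f' 0 L).
  { apply null_of_zero. lra. apply zero_indef. intros t Ht.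
    destruct Hf as [_ Hf2]. specialize (Hf2 t Ht). rewrite (HfA t Ht), (HfA 0 ltac:(lra)), Rminus_diag in Hf2. auto. }
  assert (S1 : forall D, tower D -> supp_in L D ->
     HKint (fun t => ti' t * D 1%nat t - k ^ 2 * ti t * D 0%nat t) 0 L 0).
  { intros D HD HS.
    set (xi := fun t j => if Nat.eqb j i then D 0%nat t else 0).
    set (xi' := fun t j => if Nat.eqb j i then D 1%nat t else 0).
    assert (Hx : forall j, (j < n)%nat -> test_fun L (fun t => xi t j) (fun t => xi' t j)).
    { intros j _. unfold xi, xi'. destruct (Nat.eqb j i). apply test_fun_of_tower; auto. apply zero_tower_test; auto. }
    specialize (H1 xi xi' Hx).
    destruct (tower_bound L D 0 ltac:(lra) HD) as [MD [HMD0 HMD]].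
    assert (Hn : HKint (fun t => f' t * (ti' t * D 0%nat t)) 0 L 0).
    { apply null_int. apply (null_le f' _ (Mt' * MD)); auto. apply Rmult_le_pos; auto.
      intros t Ht. rewrite Rabs_mult, Rabs_mult, Rmult_comm.
      apply Rmult_le_compat_r. apply Rabs_pos. apply Rmult_le_compat; try apply Rabs_pos; auto. }
    assert (Hm : HKint (fun t => A * (ti' t * D 1%nat t - k ^ 2 * ti t * D 0%nat t)) 0 L 0).
    { pose proof (HKint_minus _ _ 0 L 0 0 H1 Hn) as HM. rewrite Rminus_0_r in HM.
      eapply HKint_ext; [|apply HM]. intros t Ht. cbv beta. unfold xi, xi'.
      rewrite !dot_unit by auto.
      rewrite (proj_perp_zero n (tau t) (tau' t) lam Hlam i Hi).
      rewrite HfA by auto. unfold ti, ti'. ring. }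
    pose proof (HKint_scal (/ A) _ 0 L 0 Hm) as Hs. rewrite Rmult_0_r in Hs.
    eapply HKint_ext; [|apply Hs]. intros t _. cbv beta. field. auto. }
  assert (S2 : forall D, tower D -> supp_in L D ->
     HKint (fun t => ti t * D 2%nat t + k ^ 2 * ti t * D 0%nat t) 0 L 0).
  { intros D HD HS.
    pose proof (by_parts ti' ti (D 1%nat) (D 2%nat) 0 L Mt' ltac:(lra) HMt' (W1_sub L ti ti' HW) ltac:(intros; apply HD)) as HP.
    destruct (supp_ends L D 1 HD HS) as [E0 EL]. rewrite E0, EL in HP.
    replace (ti L * 0 - ti 0 * 0) with 0 in HP by ring.
    pose proof (HKint_minus _ _ 0 L 0 0 HP (S1 D HD HS)) as HM. rewrite Rminus_0_r in HM.
    eapply HKint_ext; [|apply HM]. intros t _. cbv beta. ring. }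
  set (tc := fun t => ti (clampL L t)).
  assert (Htc_lip : forall s t, Rabs (tc s - tc t) <= Kt * Rabs (s - t)).
  { intros s t. unfold tc. eapply Rle_trans. apply HKt; apply clampL_in; lra.
    apply Rmult_le_compat_l; auto. apply clampL_lip; lra. }
  assert (Htc_cont : forall x, continuous tc x) by (apply (lip_cont tc Kt); auto).
  assert (Htc_eq : forall t, 0 <= t <= L -> tc t = ti t) by (intros; unfold tc; rewrite clampL_id; auto).
  set (T := fun t => RInt tc 0 t).
  assert (HT : forall x, derivable_pt_lim T x (tc x)) by (apply prim_deriv; auto).
  assert (HT_cont : forall x, continuous T x).
  { intros x. apply continuity_pt_filterlim. apply (derivable_continuous_pt _ _ (exist _ (tc x) (HT x))). }
  set (S := fun t => RInt T 0 t).
  assert (HS : forall x, derivable_pt_lim S x (T x)) by (apply prim_deriv; auto).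
  assert (S3 : forall D, tower D -> supp_in L D ->
     HKint (fun t => S t * D 2%nat t - ti t * D 0%nat t) 0 L 0).
  { intros D HD HSu.
    assert (HF : HKint (fun t => S t * D 2%nat t - tc t * D 0%nat t) 0 L
               ((S L * D 1%nat L - T L * D 0%nat L) - (S 0 * D 1%nat 0 - T 0 * D 0%nat 0))).
    { apply (FTC (fun t => S t * D 1%nat t - T t * D 0%nat t)). lra.
      intros t _.
      replace (S t * D 2%nat t - tc t * D 0%nat t) with
        ((T t * D 1%nat t + S t * D 2%nat t) - (tc t * D 0%nat t + T t * D 1%nat t)) by ring.
      apply (derivable_pt_lim_minus (mult_fct S (D 1%nat)) (mult_fct T (D 0%nat)));
        [apply derivable_pt_lim_mult; [apply HS| apply HD] | apply derivable_pt_lim_mult; [apply HT| apply HD]]. }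
    destruct (supp_ends L D 0 HD HSu) as [E0 EL]. destruct (supp_ends L D 1 HD HSu) as [F0 FL].
    rewrite E0, EL, F0, FL in HF. replace (S L * 0 - T L * 0 - (S 0 * 0 - T 0 * 0)) with 0 in HF by ring.
    eapply HKint_ext; [|apply HF]. intros t Ht. cbv beta. rewrite Htc_eq; auto. }
  destruct (deriv_cont_bound T tc 0 L ltac:(lra) ltac:(intros; apply HT)) as [MT [HMT0 HMT]].
  set (U := fun t => ti t + k ^ 2 * S t).
  assert (HU : forall s t, 0 <= s <= L -> 0 <= t <= L -> Rabs (U s - U t) <= (Kt + k ^ 2 * MT) * Rabs (s - t)).
  { intros s t Hs Ht. unfold U.
    replace (ti s + k ^ 2 * S s - (ti t + k ^ 2 * S t)) with ((ti s - ti t) + k ^ 2 * (S s - S t)) by ring.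
    eapply Rle_trans; [apply Rabs_triang|]. rewrite Rabs_mult, (Rabs_right (k ^ 2)) by (apply Rle_ge, pow2_ge_0).
    pose proof (HKt s t Hs Ht). pose proof (lip_of_deriv S T 0 L MT HS HMT s t Hs Ht).
    pose proof (pow2_ge_0 k).
    assert (k ^ 2 * Rabs (S s - S t) <= k ^ 2 * (MT * Rabs (s - t))) by (apply Rmult_le_compat_l; auto).
    lra. }
  assert (HUK : 0 <= Kt + k ^ 2 * MT) by (pose proof (pow2_ge_0 k); nra).
  assert (HUD : forall D, tower D -> (exists a b, 0 < a /\ a <= b /\ b < L /\ forall t, t < a \/ b < t -> D 0%nat t = 0) ->
      HKint (fun t => U t * D 2%nat t) 0 L 0).
  { intros D HD HSu. pose proof (HKint_plus _ _ 0 L 0 (k ^ 2 * 0) (S2 D HD HSu) (HKint_scal (k ^ 2) _ 0 L 0 (S3 D HD HSu))) as HH.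
    replace (0 + k ^ 2 * 0) with 0 in HH by ring.
    eapply HKint_ext; [|apply HH]. intros t _. cbv beta. unfold U. ring. }
  destruct (DBR_affine U _ L HL HUK HU HUD) as [A' [B' HAB]].
  exists (fun t => A' + B' * t - k ^ 2 * S t), (fun t => B' - k ^ 2 * T t).
  split; [|split; [|split]].
  - intros t. exact (derivable_pt_lim_minus (fun t => A' + B' * t) (mult_real_fct (k^2) S) t B' (k^2 * T t) (affine_deriv2 A' B' t) (derivable_pt_lim_scal S (k^2) t (T t) (HS t))).
  - intros t Ht.
    replace (- k ^ 2 * (A' + B' * t - k ^ 2 * S t)) with (0 - k ^ 2 * tc t).
    apply (derivable_pt_lim_minus (fct_cte B') (mult_real_fct (k ^ 2) T)).
    apply derivable_pt_lim_const. apply derivable_pt_lim_scal; auto.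
    rewrite Htc_eq by auto. specialize (HAB t Ht). unfold U in HAB. 
    replace (ti t) with (A' + B' * t - k ^ 2 * S t) by lra. ring.
  - intros t Ht. specialize (HAB t Ht). unfold U in HAB. fold (ti t). lra.
  - intros t Ht.
    assert (E1 : HKint ti' 0 t (ti t - ti 0)) by (destruct HW as [_ HW2]; apply HW2; auto).
    assert (E2 : HKint (fun s => B' - k ^ 2 * T s) 0 t ((A' + B' * t - k ^ 2 * S t) - (A' + B' * 0 - k ^ 2 * S 0))).
    { apply (FTC (fun t => A' + B' * t - k ^ 2 * S t)). lra. intros s _.
      exact (derivable_pt_lim_minus (fun t => A' + B' * t) (mult_real_fct (k^2) S) s B' (k^2 * T s) (affine_deriv2 A' B' s) (derivable_pt_lim_scal S (k^2) s (T s) (HS s))). }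
    pose proof (HKint_minus _ _ 0 t _ _ E1 E2) as HM.
    assert (Ht0 := HAB t Ht). assert (H00 := HAB 0 ltac:(lra)). unfold U in Ht0, H00.
    replace (ti t - ti 0 - (A' + B' * t - k ^ 2 * S t - (A' + B' * 0 - k ^ 2 * S 0))) with 0 in HM by lra.
    auto.
Qed.

Lemma dot_deriv2 (n : nat) (a b : R -> nat -> R) (a' b' : nat -> R) x :
  (forall i, (i < n)%nat -> derivable_pt_lim (fun t => a t i) x (a' i)) ->
  (forall i, (i < n)%nat -> derivable_pt_lim (fun t => b t i) x (b' i)) ->
  derivable_pt_lim (fun t => dot n (a t) (b t)) x (dot n a' (b x) + dot n (a x) b').
Proof.
  induction n as [|n IH]; intros Ha Hb; simpl.
  - replace (0 + 0) with 0 by ring. apply (derivable_pt_lim_const 0 x).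
  - replace (dot n a' (b x) + a' n * b x n + (dot n (a x) b' + a x n * b' n)) with
      ((dot n a' (b x) + dot n (a x) b') + (a' n * b x n + a x n * b' n)) by ring.
    apply (derivable_pt_lim_plus (fun t => dot n (a t) (b t)) (fun t => a t n * b t n)).
    apply IH; intros; [apply Ha|apply Hb]; lia.
    apply (derivable_pt_lim_mult (fun t => a t n) (fun t => b t n)); [apply Ha|apply Hb]; lia.
Qed.

Lemma dot_deriv_r (n : nat) (mu : nat -> R) (b : R -> nat -> R) (b' : nat -> R) x :
  (forall i, (i < n)%nat -> derivable_pt_lim (fun t => b t i) x (b' i)) ->
  derivable_pt_lim (fun t => dot n mu (b t)) x (dot n mu b').
Proof.
  intros Hb. pose proof (dot_deriv2 n (fun _ => mu) b (fun _ => 0) b' x) as H.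
  replace (dot n mu b') with (dot n (fun _ => 0) (b x) + dot n mu b').
  apply H; auto. intros; apply (derivable_pt_lim_const (mu i) x).
  rewrite (dot_zero_l n (fun _ => 0)); [ring|]. intros i _; auto.
Qed.

Lemma sumabs_bound (n : nat) x M : (forall i, (i < n)%nat -> Rabs (x i) <= M) -> sumabs n x <= INR n * M.
Proof.
  induction n as [|n IH]; intros H. simpl; lra.
  change (sumabs (S n) x) with (sumabs n x + Rabs (x n)). rewrite (S_INR n). assert (sumabs n x <= INR n * M) by (apply IH; intros; apply H; lia).
  assert (Rabs (x n) <= M) by (apply H; lia). lra.
Qed.

Lemma dot_le_bound (n : nat) y M : (forall i, (i < n)%nat -> Rabs (y i) <= M) -> 0 <= M ->
  dot n y y <= (INR n * M) * (INR n * M).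
Proof.
  intros H HM. eapply Rle_trans; [apply dot_le_sumabs|].
  pose proof (sumabs_nonneg n y). pose proof (sumabs_bound n y M H).
  apply Rmult_le_compat; auto.
Qed.

Lemma cosk_deriv k t : derivable_pt_lim (fun t => cos (k * t)) t (- k * sin (k * t)).
Proof. apply is_derive_Reals. auto_derive; auto. ring. Qed.
Lemma sink_deriv k t : k <> 0 -> derivable_pt_lim (fun t => sin (k * t) / k) t (cos (k * t)).
Proof. intros Hk. apply is_derive_Reals. auto_derive; auto. field; auto. Qed.

Lemma z_const k L F v : 0 < k -> 0 < L ->
  (forall t, derivable_pt_lim F t (v t)) ->
  (forall t, 0 <= t <= L -> derivable_pt_lim v t (- k ^ 2 * F t)) ->
  forall t, 0 <= t <= L -> cos (k * t) * F t + (- sin (k * t) / k) * v t = F 0.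
Proof.
  intros Hk HL HF Hv t Ht.
  set (zd := fun c => (- k * sin (k * c) * F c + cos (k * c) * v c) - (cos (k * c) * v c + sin (k * c) / k * (- k ^ 2 * F c))).
  assert (E : (fun t => cos (k * t) * F t - sin (k * t) / k * v t) t = (fun t => cos (k * t) * F t - sin (k * t) / k * v t) 0).
  { apply (const_on (fun t => cos (k * t) * F t - sin (k * t) / k * v t) zd 0 t); try lra.
    - intros c Hc. unfold zd.
      exact (derivable_pt_lim_minus (mult_fct (fun t => cos (k * t)) F) (mult_fct (fun t => sin (k * t) / k) v) c _ _
        (derivable_pt_lim_mult (fun t => cos (k * t)) F c _ _ (cosk_deriv k c) (HF c))
        (derivable_pt_lim_mult (fun t => sin (k * t) / k) v c _ _ (sink_deriv k c ltac:(lra)) (Hv c ltac:(lra)))).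
    - intros c Hc. unfold zd. field. lra. }
  simpl in E. rewrite Rmult_0_r, cos_0, sin_0 in E.
  replace (- sin (k * t) / k * v t) with (- (sin (k * t) / k * v t)) by (field; lra). lra.
Qed.

Lemma lip_of_deriv_on F F' a b M : (forall t, a <= t <= b -> derivable_pt_lim F t (F' t)) ->
  (forall t, a <= t <= b -> Rabs (F' t) <= M) ->
  forall s t, a <= s <= b -> a <= t <= b -> Rabs (F s - F t) <= M * Rabs (s - t).
Proof.
  intros HF HM s t Hs Ht.
  assert (Hin : forall c, Rmin t s <= c <= Rmax t s -> a <= c <= b).
  { intros c Hc. split. eapply Rle_trans; [|apply Hc]. apply Rmin_glb; lra. eapply Rle_trans; [apply Hc|]. apply Rmax_lub; lra. }
  destruct (MVT_abs F F' t s) as [c [Hc1 Hc2]]. intros; apply HF, Hin; auto.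
  rewrite Hc1. apply Rmult_le_compat_r. apply Rabs_pos. apply HM, Hin; auto.
Qed.

Lemma abs_le_of_sq a b : 0 <= b -> a * a <= b * b -> Rabs a <= b.
Proof. intros Hb H. apply Rabs_le. split; nra. Qed.

Theorem heavy n L k beta tau tau' f f' lam :
  0 < L -> beta_hyp L beta ->
  (forall i, (i < n)%nat -> W1inf L (fun t => tau t i) (fun t => tau' t i)) ->
  (forall t, 0 <= t <= L -> dot n (tau t) (tau t) = 1) ->
  0 <= k -> W1inf L f f' -> (exists t, 0 <= t <= L /\ f t <> 0) ->
  eqn n lam (fun _ => 0) -> weak_eqs n L k beta tau tau' f f' lam ->
  exists (ft ft' : R -> R) (lt : nat -> R),
    W1inf L ft ft' /\ (forall t, 0 <= t <= L -> 0 <= ft t) /\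
    (exists t, 0 <= t <= L /\ ft t <> 0) /\ dot n lt lt = 1 /\
    weak_eqs n L k beta tau tau' ft ft' lt.
Proof.
  intros HL Hbeta Htau Hunit Hk Hf Hfnz Hlam Hweak.
  destruct (f_const n L k beta tau tau' f f' lam HL Hf Hfnz Hlam Hweak) as [A [HA HfA]].
  destruct (choice_nat ((fun _ : R => 0), (fun _ : R => 0)) n
    (fun i Fv => (forall t, derivable_pt_lim (fst Fv) t (snd Fv t)) /\
       (forall t, 0 <= t <= L -> derivable_pt_lim (snd Fv) t (- k ^ 2 * fst Fv t)) /\
       (forall t, 0 <= t <= L -> fst Fv t = tau t i) /\
       (forall t, 0 <= t <= L -> HKint (fun s => tau' s i - snd Fv s) 0 t 0))) as [Fv HFv].
  { intros i Hi. destruct (tau_reg n L k beta tau tau' f f' lam A i HL Htau Hf HA HfA Hlam Hweak Hi) as [F [v HH]].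
    exists (F, v). exact HH. }
  set (F := fun t i => fst (Fv i) t). set (v := fun t i => snd (Fv i) t).
  assert (HF : forall i, (i < n)%nat -> forall t, derivable_pt_lim (fun t => F t i) t (v t i)) by (intros; apply HFv; auto).
  assert (Hv : forall i, (i < n)%nat -> forall t, 0 <= t <= L -> derivable_pt_lim (fun t => v t i) t (- k ^ 2 * F t i)) by (intros; apply HFv; auto).
  assert (HFt : forall t, 0 <= t <= L -> eqn n (F t) (tau t)) by (intros t Ht i Hi; apply HFv; auto).
  assert (He : forall i, (i < n)%nat -> forall t, 0 <= t <= L -> HKint (fun s => tau' s i - v s i) 0 t 0) by (intros; apply HFv; auto).
  clearbody F v. clear HFv.
  set (mu := tau 0).
  assert (Hmu : dot n mu mu = 1) by (apply Hunit; lra).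
  destruct Hbeta as [[Vb HVb] [mb [Mb [Hmb HmM]]]].
  assert (HMb : forall t, 0 <= t <= L -> Rabs (beta t) <= Mb).
  { intros t Ht. destruct (HmM t Ht). rewrite Rabs_right by lra. lra. }
  assert (HMb0 : 0 <= Mb) by (destruct (HmM 0 ltac:(lra)); lra).
  destruct (finite_bound n L (fun i t => tau' t i)) as [Mt [HMt0 HMt]].
  { intros i Hi. destruct (W1_bound L _ _ (Htau i Hi)) as [M [_ HM]]. exists M; auto. }
  destruct (finite_bound n L (fun i t => mu i)) as [Mmu [HMmu0 HMmu]].
  { intros i Hi. exists (Rabs (mu i)). intros; lra. }
  set (c := fun t => dot n mu (v t)).
  assert (Hc_der : forall t, 0 <= t <= L -> derivable_pt_lim c t (dot n mu (fun i => - k ^ 2 * F t i))).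
  { intros t Ht. apply dot_deriv_r. intros i Hi. apply Hv; auto. }
  assert (Hc_dbound : forall t, 0 <= t <= L -> Rabs (dot n mu (fun i => - k ^ 2 * F t i)) <= k ^ 2).
  { intros t Ht. rewrite dot_scal_r. rewrite (dot_eqn n mu mu (F t) (tau t)) by (auto; intros i _; auto).
    rewrite Rabs_mult. rewrite Rabs_Ropp, (Rabs_right (k ^ 2)) by (apply Rle_ge, pow2_ge_0).
    pose proof (cauchy_schwarz n mu (tau t)) as CS. rewrite Hmu, (Hunit t Ht) in CS.
    assert (Rabs (dot n mu (tau t)) <= 1) by (apply abs_le_of_sq; lra).
    pose proof (pow2_ge_0 k). pose proof (Rabs_pos (dot n mu (tau t))). nra. }
  assert (Hc_lip : forall s t, 0 <= s <= L -> 0 <= t <= L -> Rabs (c s - c t) <= k ^ 2 * Rabs (s - t)).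
  { apply (lip_of_deriv_on c (fun t => dot n mu (fun i => - k ^ 2 * F t i)) 0 L); auto. }
  set (Cc := Rabs (c 0) + k ^ 2 * L).
  assert (HCc : forall t, 0 <= t <= L -> Rabs (c t) <= Cc).
  { intros t Ht. pose proof (Hc_lip t 0 Ht ltac:(lra)). rewrite Rminus_0_r, (Rabs_right t) in H by lra.
    unfold Cc. replace (c t) with (c 0 + (c t - c 0)) by ring. eapply Rle_trans; [apply Rabs_triang|].
    pose proof (pow2_ge_0 k). assert (k ^ 2 * t <= k ^ 2 * L) by (apply Rmult_le_compat_l; lra). lra. }
  assert (HCc0 : 0 <= Cc) by (specialize (HCc 0 ltac:(lra)); pose proof (Rabs_pos (c 0)); lra).
  assert (Hint : forall t, exists I, 0 <= t <= L -> HKint (fun s => beta s * c s) 0 t I).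
  { intros t. destruct (classic (0 <= t <= L)) as [Ht|Ht].
    - destruct (bv_integrable beta L c Cc (k^2) Mb t (ex_intro _ Vb HVb) HMb HCc Hc_lip Ht) as [I HI]. exists I; auto.
    - exists 0; intros; contradiction. }
  set (Ifun := fun t => proj1_sig (constructive_indefinite_description _ (Hint t))).
  assert (HI : forall t, 0 <= t <= L -> HKint (fun s => beta s * c s) 0 t (Ifun t)).
  { intros t Ht. unfold Ifun. destruct (constructive_indefinite_description _ (Hint t)); simpl; auto. }
  clearbody Ifun.
  set (E := fun t => sumabs n (vsub (tau' t) (v t))).
  assert (HE0 : forall t, 0 <= E t) by (intros; apply sumabs_nonneg).
  assert (HE : forall t1, 0 <= t1 <= L -> null_on E 0 t1).
  { intros t1 Ht1. apply (null_sumabs n (fun i t => tau' t i - v t i)). intros i Hi.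
    apply null_of_zero. lra. apply zero_indef. intros t Ht. apply He; auto; lra. }
  set (g' := fun t => beta t * dot n mu (tau' t)).
  assert (Hg'I : forall t, 0 <= t <= L -> HKint g' 0 t (Ifun t)).
  { intros t Ht.
    assert (HN : HKint (fun s => beta s * dot n mu (vsub (tau' s) (v s))) 0 t 0).
    { apply null_int. apply (null_le E _ (Mb * Mmu)). apply Rmult_le_pos; auto. apply HE; auto.
      intros s Hs. rewrite Rabs_mult, (Rabs_right (E s)) by (apply Rle_ge; auto).
      rewrite Rmult_assoc. apply Rmult_le_compat; try apply Rabs_pos. apply HMb; lra.
      apply dot_abs_bound. intros i Hi; apply (HMmu i 0); auto; lra. }
    pose proof (HKint_plus _ _ 0 t _ _ (HI t Ht) HN) as HH. rewrite Rplus_0_r in HH.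
    eapply HKint_ext; [|apply HH]. intros s Hs. unfold g', c. cbv beta. rewrite dot_vsub_r. ring. }
  set (Mg' := Mb * (Mmu * (INR n * Mt))).
  assert (HMg' : forall t, 0 <= t <= L -> Rabs (g' t) <= Mg').
  { intros t Ht. unfold g', Mg'. rewrite Rabs_mult. apply Rmult_le_compat; try apply Rabs_pos. apply HMb; auto.
    eapply Rle_trans. apply dot_abs_bound. intros i Hi; apply (HMmu i 0); auto; lra.
    apply Rmult_le_compat_l; auto. apply sumabs_bound. intros; apply HMt; auto. }
  assert (HMg'0 : 0 <= Mg') by (specialize (HMg' 0 ltac:(lra)); pose proof (Rabs_pos (g' 0)); lra).
  set (Bh := Mb * Cc).
  assert (HBh : forall t, 0 <= t <= L -> Rabs (beta t * c t) <= Bh).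
  { intros t Ht. rewrite Rabs_mult. apply Rmult_le_compat; try apply Rabs_pos; auto. }
  assert (HBh0 : 0 <= Bh) by (apply Rmult_le_pos; auto).
  set (C0 := Bh * L + 1).
  set (g := fun t => C0 + Ifun t).
  assert (HI0 : Ifun 0 = 0) by (apply (HKint_point (fun s => beta s * c s) 0); apply HI; lra).
  assert (HIb : forall t, 0 <= t <= L -> Rabs (Ifun t) <= Bh * L).
  { intros t Ht. assert (HB' : forall s, 0 <= s <= t -> Rabs (beta s * c s) <= Bh) by (intros; apply HBh; lra).
    pose proof (HKint_bound (fun s => beta s * c s) 0 t (Ifun t) Bh (proj1 Ht) HB' (HI t Ht)).
    assert (Bh * (t - 0) <= Bh * L) by (apply Rmult_le_compat_l; lra). lra. }
  assert (HgW : W1inf L g g').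
  { split. exists Mg'. auto.
    intros t Ht. unfold g. replace (C0 + Ifun t - (C0 + Ifun 0)) with (Ifun t) by (rewrite HI0; ring). auto. }
  assert (Hgb : forall t, 0 <= t <= L -> Rabs (g t) <= C0 + Bh * L).
  { intros t Ht. unfold g. eapply Rle_trans; [apply Rabs_triang|]. rewrite (Rabs_right C0) by (unfold C0; nra).
    pose proof (HIb t Ht). lra. }
  exists g, g', mu. split; [auto|split; [|split; [|split; [auto|split]]]].
  - intros t Ht. unfold g. pose proof (HIb t Ht). apply Rabs_def2b in H || (pose proof (Rle_abs (- Ifun t)); rewrite Rabs_Ropp in *).
    unfold C0. lra.
  - exists 0. split; [lra|]. unfold g. rewrite HI0. unfold C0. nra.
  -
    intros xi xi' Hxi.
    destruct (choice_nat (fun (_ : nat) (_ : R) => 0) n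
      (fun i D => tower D /\ supp_in L D /\ D 0%nat = (fun t => xi t i) /\ D 1%nat = (fun t => xi' t i))) as [Dx HDx].
    { intros i Hi. apply tower_of_test_fun; auto. }
    assert (Hxd : forall i, (i < n)%nat -> forall t, derivable_pt_lim (fun t => xi t i) t (xi' t i)).
    { intros i Hi t. destruct (HDx i Hi) as (T1 & T2 & T3 & T4).
      replace (fun t => xi t i) with (Dx i 0%nat). replace (xi' t i) with (Dx i 1%nat t). apply T1.
      rewrite T4; auto. }
    assert (Hx0 : forall i, (i < n)%nat -> xi 0 i = 0 /\ xi L i = 0).
    { intros i Hi. destruct (HDx i Hi) as (T1 & T2 & T3 & T4).
      destruct (supp_ends L (Dx i) 0 T1 T2) as [Z0 ZL]. rewrite T3 in Z0, ZL. auto. }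
    destruct (finite_bound n L (fun i t => xi t i)) as [Mx1 [HMx10 HMx1]].
    { intros i Hi. destruct (HDx i Hi) as (T1 & T2 & T3 & T4).
      destruct (tower_bound L (Dx i) 0 ltac:(lra) T1) as [M [_ HM]]. exists M. rewrite T3 in HM. auto. }
    destruct (finite_bound n L (fun i t => xi' t i)) as [Mx2 [HMx20 HMx2]].
    { intros i Hi. destruct (HDx i Hi) as (T1 & T2 & T3 & T4).
      destruct (tower_bound L (Dx i) 1 ltac:(lra) T1) as [M [_ HM]]. exists M. rewrite T4 in HM. auto. }
    set (Mx := Rmax Mx1 Mx2).
    assert (HMx : forall i t, (i < n)%nat -> 0 <= t <= L -> Rabs (xi t i) <= Mx /\ Rabs (xi' t i) <= Mx).
    { intros i t Hi Ht. split. eapply Rle_trans; [apply HMx1; auto|apply Rmax_l]. eapply Rle_trans; [apply HMx2; auto|apply Rmax_r]. }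
    assert (HMx0 : 0 <= Mx) by (eapply Rle_trans; [apply HMx10|apply Rmax_l]).
    set (w := fun t => dot n (v t) (xi t)).
    set (w' := fun t => dot n (fun i => - k ^ 2 * F t i) (xi t) + dot n (v t) (xi' t)).
    assert (P1 : HKint (fun t => g' t * w t + g t * w' t) 0 L 0).
    { pose proof (by_parts g' g w w' 0 L Mg' ltac:(lra) HMg' (W1_sub L g g' HgW)) as HP.
      assert (Hw0 : w 0 = 0 /\ w L = 0).
      { unfold w. split; rewrite dot_comm; apply dot_zero_l; intros i Hi; apply Hx0; auto. }
      destruct Hw0 as [W0 WL]. rewrite W0, WL in HP. replace (g L * 0 - g 0 * 0) with 0 in HP by ring.
      apply HP. intros t Ht. unfold w, w'. apply (dot_deriv2 n v xi (fun i => - k ^ 2 * F t i) (xi' t)).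
      intros i Hi; apply Hv; auto. intros i Hi; apply Hxd; auto. }
    assert (P2 : HKint (fun t => g t * dot n (vsub (tau' t) (v t)) (xi' t) + g' t * dot n (vsub (tau' t) (v t)) (xi t)) 0 L 0).
    { apply null_int. apply (null_le E _ ((C0 + Bh * L) * Mx + Mg' * Mx)).
      assert (0 <= C0 + Bh * L) by (unfold C0; nra). nra. apply HE; lra.
      intros t Ht. rewrite (Rabs_right (E t)) by (apply Rle_ge; auto).
      eapply Rle_trans; [apply Rabs_triang|]. rewrite !Rabs_mult.
      assert (Q1 : Rabs (dot n (vsub (tau' t) (v t)) (xi' t)) <= Mx * E t).
      { rewrite dot_comm. apply dot_abs_bound. intros i Hi; apply HMx; auto. }
      assert (Q2 : Rabs (dot n (vsub (tau' t) (v t)) (xi t)) <= Mx * E t).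
      { rewrite dot_comm. apply dot_abs_bound. intros i Hi; apply HMx; auto. }
      assert (Rabs (g t) * Rabs (dot n (vsub (tau' t) (v t)) (xi' t)) <= (C0 + Bh * L) * (Mx * E t)).
      { apply Rmult_le_compat; try apply Rabs_pos; auto. }
      assert (Rabs (g' t) * Rabs (dot n (vsub (tau' t) (v t)) (xi t)) <= Mg' * (Mx * E t)).
      { apply Rmult_le_compat; try apply Rabs_pos; auto. }
      lra. }
    assert (P3 : HKint (fun t => k ^ 2 * beta t * dot n (proj_perp n (tau t) (tau' t) mu) (xi t)) 0 L 0).
    { destruct (Req_dec k 0) as [Hk0|Hk0].
      - eapply HKint_ext; [|apply HKint_zero]. intros t _. rewrite Hk0. ring.
      - assert (Hkp : 0 < k) by lra.
        apply null_int. apply (null_le E _ (k * Mb * (INR n * Mx))).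
        pose proof (pos_INR n). repeat apply Rmult_le_pos; lra. apply HE; lra.
        intros t Ht. rewrite (Rabs_right (E t)) by (apply Rle_ge; auto).
        set (gam := - sin (k * t) / k).
        assert (Heq : eqn n mu (fun i => cos (k * t) * tau t i + gam * v t i)).
        { intros i Hi. unfold mu, gam. rewrite <- (HFt t Ht i Hi), <- (HFt 0 ltac:(lra) i Hi).
          symmetry. apply (z_const k L (fun t => F t i) (fun t => v t i) Hkp HL); auto. }
        pose proof (P_bound n (tau t) (tau' t) mu (v t) (cos (k * t)) gam (xi t)) as PB.
        rewrite (Hunit t Ht) in PB. specialize (PB ltac:(lra) Heq).
        set (PX := dot n (proj_perp n (tau t) (tau' t) mu) (xi t)) in *.
        assert (G1 : gam * gam <= / k * / k).
        { unfold gam. pose proof (SIN_bound (k * t)). replace (- sin (k * t) / k * (- sin (k * t) / k)) with (sin (k * t) * sin (k * t) * (/ k * / k)) by (field; lra).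
          assert (0 < / k * / k) by (apply Rmult_lt_0_compat; apply Rinv_0_lt_compat; lra).
          assert (sin (k * t) * sin (k * t) <= 1) by nra. nra. }
        assert (G2 : dot n (vsub (tau' t) (v t)) (vsub (tau' t) (v t)) <= E t * E t) by apply dot_le_sumabs.
        assert (G3 : dot n (xi t) (xi t) <= (INR n * Mx) * (INR n * Mx)).
        { apply dot_le_bound; auto. intros i Hi; apply HMx; auto. }
        assert (G4 : PX * PX <= (/ k * E t * (INR n * Mx)) * (/ k * E t * (INR n * Mx))).
        { eapply Rle_trans; [apply PB|].
          pose proof (dot_nonneg n (vsub (tau' t) (v t))). pose proof (dot_nonneg n (xi t)).
          pose proof (Rle_0_sqr gam). unfold Rsqr in H1.
          assert (K1 : gam * gam * dot n (vsub (tau' t) (v t)) (vsub (tau' t) (v t)) <= / k * / k * (E t * E t)).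
          { apply Rmult_le_compat; auto. }
          assert (K2 : 0 <= gam * gam * dot n (vsub (tau' t) (v t)) (vsub (tau' t) (v t))) by (apply Rmult_le_pos; auto).
          apply Rle_trans with (/ k * / k * (E t * E t) * ((INR n * Mx) * (INR n * Mx))).
          apply Rmult_le_compat; auto.
          right; ring. }
        assert (G5 : Rabs PX <= / k * E t * (INR n * Mx)).
        { apply abs_le_of_sq; auto. pose proof (pos_INR n). assert (0 < / k) by (apply Rinv_0_lt_compat; lra).
          specialize (HE0 t). repeat apply Rmult_le_pos; lra. }
        rewrite !Rabs_mult. rewrite (Rabs_right (k ^ 2)) by (apply Rle_ge, pow2_ge_0).
        apply Rle_trans with (k ^ 2 * Mb * (/ k * E t * (INR n * Mx))).
        apply Rmult_le_compat; try apply Rabs_pos. apply Rmult_le_pos; [apply pow2_ge_0|apply Rabs_pos].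
        apply Rmult_le_compat_l. apply pow2_ge_0. apply HMb; auto. auto.
        right. field. lra. }
    pose proof (HKint_plus _ _ 0 L 0 0 P1 P2) as HS0. rewrite Rplus_0_r in HS0.
    pose proof (HKint_plus _ _ 0 L 0 0 HS0 P3) as HS. rewrite Rplus_0_r in HS.
    eapply HKint_ext; [|apply HS]. intros t Ht. cbv beta. unfold w, w'.
    rewrite !dot_vsub_l, dot_scal_l. rewrite (dot_eqn n (F t) (tau t) (xi t) (xi t)) by (auto; intros i _; auto).
    unfold g'. ring.
  -
    intros phi phi' Htf. destruct (tower_of_test_fun L phi phi' Htf) as [D [HD [HS [HD0 HD1]]]].
    pose proof (by_parts g' g phi phi' 0 L Mg' ltac:(lra) HMg' (W1_sub L g g' HgW)) as HP.
    destruct (supp_ends L D 0 HD HS) as [Z0 ZL]. rewrite HD0 in Z0, ZL. rewrite Z0, ZL in HP.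
    replace (g L * 0 - g 0 * 0) with 0 in HP by ring.
    eapply HKint_ext; [|apply HP].
    + intros t _. cbv beta. unfold g'. ring.
    + intros t _. rewrite <- HD0, <- HD1. apply HD.
Qed.

Theorem mainTheorem11 (n : nat) (L k : R) (beta : R -> R)
    (tau tau' : R -> nat -> R) (f f' : R -> R) (lam : nat -> R) :
  0 < L ->
  beta_hyp L beta ->
  (forall i, (i < n)%nat -> W1inf L (fun t => tau t i) (fun t => tau' t i)) ->
  (forall t, 0 <= t <= L -> dot n (tau t) (tau t) = 1) ->
  0 <= k ->
  W1inf L f f' ->
  (forall t, 0 <= t <= L -> 0 <= f t) ->
  (exists t, 0 <= t <= L /\ f t <> 0) ->
  weak_eqs n L k beta tau tau' f f' lam ->
  exists (ft ft' : R -> R) (lt : nat -> R),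
    W1inf L ft ft' /\
    (forall t, 0 <= t <= L -> 0 <= ft t) /\
    (exists t, 0 <= t <= L /\ ft t <> 0) /\
    dot n lt lt = 1 /\
    weak_eqs n L k beta tau tau' ft ft' lt.
Proof.
  intros HL Hbeta Htau Hunit Hk Hf Hfnn Hfnz Hweak.
  destruct (Req_dec (dot n lam lam) 0) as [H0|H0].
  - apply (heavy n L k beta tau tau' f f' lam); auto. apply dot_zero; auto.
  - pose proof (dot_nonneg n lam) as HD. assert (HDp : 0 < dot n lam lam) by lra.
    set (c := / sqrt (dot n lam lam)).
    assert (Hs : 0 < sqrt (dot n lam lam)) by (apply sqrt_lt_R0; auto).
    assert (Hc : 0 < c) by (unfold c; apply Rinv_0_lt_compat; auto).
    exists (fun t => c * f t), (fun t => c * f' t), (vscale c lam).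
    destruct Hf as [[M HM] Hf2]. destruct Hweak as [W1 W2].
    split; [|split; [|split; [|split; [|split]]]].
    + split.
      * exists (c * M). intros t Ht. rewrite Rabs_mult, (Rabs_right c) by lra.
        apply Rmult_le_compat_l; [lra|auto].
      * intros t Ht. replace (c * f t - c * f 0) with (c * (f t - f 0)) by ring. apply HKint_scal; auto.
    + intros t Ht. apply Rmult_le_pos; [lra|auto].
    + destruct Hfnz as [t0 [Ht0 Hft0]]. exists t0. split; auto.
      apply Rmult_integral_contrapositive; split; lra.
    + rewrite dot_vscale_l, dot_vscale_r. unfold c.
      pose proof (sqrt_sqrt (dot n lam lam) HD) as Hsq.
      replace (/ sqrt (dot n lam lam) * (/ sqrt (dot n lam lam) * dot n lam lam)) with
        (dot n lam lam / (sqrt (dot n lam lam) * sqrt (dot n lam lam))) by (field; lra).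
      rewrite Hsq. field. lra.
    + intros xi xi' Hxi. pose proof (HKint_scal c _ 0 L 0 (W1 xi xi' Hxi)) as HH. rewrite Rmult_0_r in HH.
      eapply HKint_ext; [|apply HH]. intros t _. cbv beta.
      rewrite proj_perp_scale, dot_vscale_l. ring.
    + intros phi phi' Hphi. pose proof (HKint_scal c _ 0 L 0 (W2 phi phi' Hphi)) as HH. rewrite Rmult_0_r in HH.
      eapply HKint_ext; [|apply HH]. intros t _. cbv beta.
      rewrite dot_vscale_l. ring.
Qed.
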